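(* Let $J\in\mathbb{R}^{3\times3}$ be symmetric positive definite, and let $R_d:[0,\infty)\to\mathsf{SO(3)}$ be a $C^2$ attitude command with $\dot R_d=R_d\hat\Omega_d$. Let $k_R,k_\Omega>0$ and define the control $$u=-k_Re_R-k_\Omega e_\Omega+\Omega\times J\Omega-J\big(\hat\Omega R^TR_d\Omega_d-R^TR_d\dot\Omega_d\big).$$ Consider the closed-loop system $J\dot\Omega+\Omega\times J\Omega=u$, $\dot R=R\hat\Omega$. If the initial condition satisfies $$\Psi(R(0),R_d(0))<2,\qquad \|e_\Omega(0)\|^2<\frac{2k_R}{\lambda_{\max}(J)}\big(2-\Psi(R(0),R_d(0))\big),$$ then $\Psi(R(t),R_d(t))<2$ for all $t\ge0$ (so $e_R$ remains well defined), and the zero equilibrium $(e_R,e_\Omega)=(0,0)$ is exponentially stable with this set contained in its region of attraction: there exist constants $C,\beta>0$ (depending on $J,k_R,k_\Omega$) such that $$\|e_R(t)\|^2+\|e_\Omega(t)\|^2\le C\big(\|e_R(0)\|^2+\|e_\Omega(0)\|^2\big)e^{-\beta t}\quad\text{for all }t\ge0.$$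
   Context: $\mathsf{SO(3)}$ is the group of $3\times3$ rotation matrices; $\hat x$ denotes the skew-symmetric matrix with $\hat x y=x\times y$, and $\vee$ is its inverse. $\Psi(R,R_d)=2-\sqrt{1+\mathrm{tr}(R_d^TR)}$, $e_R=\frac{1}{2\sqrt{1+\mathrm{tr}(R_d^TR)}}(R_d^TR-R^TR_d)^\vee$ (defined when $\Psi<2$), and $e_\Omega=\Omega-R^TR_d\Omega_d$. $\lambda_{\max}(J)$ is the largest eigenvalue of $J$. *)

(* Defs.v *)
From Stdlib Require Import Reals Lra.
Open Scope R_scope.

Record vec : Type := mkV { v1 : R; v2 : R; v3 : R }.
Record mat : Type := mkM {
  m11 : R; m12 : R; m13 : R;
  m21 : R; m22 : R; m23 : R;
  m31 : R; m32 : R; m33 : R }.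

Definition vadd (a b : vec) : vec := mkV (v1 a + v1 b) (v2 a + v2 b) (v3 a + v3 b).
Definition vopp (a : vec) : vec := mkV (- v1 a) (- v2 a) (- v3 a).
Definition vsub (a b : vec) : vec := vadd a (vopp b).
Definition vscale (c : R) (a : vec) : vec := mkV (c * v1 a) (c * v2 a) (c * v3 a).
Definition vzero : vec := mkV 0 0 0.
Definition dot (a b : vec) : R := v1 a * v1 b + v2 a * v2 b + v3 a * v3 b.
Definition vnorm (a : vec) : R := sqrt (dot a a).
Definition cross (a b : vec) : vec :=
  mkV (v2 a * v3 b - v3 a * v2 b)
      (v3 a * v1 b - v1 a * v3 b)
      (v1 a * v2 b - v2 a * v1 b).

Definition mT (A : mat) : mat :=
  mkM (m11 A) (m21 A) (m31 A)
      (m12 A) (m22 A) (m32 A)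
      (m13 A) (m23 A) (m33 A).
Definition mmul (A B : mat) : mat :=
  mkM (m11 A * m11 B + m12 A * m21 B + m13 A * m31 B)
      (m11 A * m12 B + m12 A * m22 B + m13 A * m32 B)
      (m11 A * m13 B + m12 A * m23 B + m13 A * m33 B)
      (m21 A * m11 B + m22 A * m21 B + m23 A * m31 B)
      (m21 A * m12 B + m22 A * m22 B + m23 A * m32 B)
      (m21 A * m13 B + m22 A * m23 B + m23 A * m33 B)
      (m31 A * m11 B + m32 A * m21 B + m33 A * m31 B)
      (m31 A * m12 B + m32 A * m22 B + m33 A * m32 B)
      (m31 A * m13 B + m32 A * m23 B + m33 A * m33 B).
Definition msub (A B : mat) : mat :=
  mkM (m11 A - m11 B) (m12 A - m12 B) (m13 A - m13 B)
      (m21 A - m21 B) (m22 A - m22 B) (m23 A - m23 B)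
      (m31 A - m31 B) (m32 A - m32 B) (m33 A - m33 B).
Definition mvmul (A : mat) (x : vec) : vec :=
  mkV (m11 A * v1 x + m12 A * v2 x + m13 A * v3 x)
      (m21 A * v1 x + m22 A * v2 x + m23 A * v3 x)
      (m31 A * v1 x + m32 A * v2 x + m33 A * v3 x).
Definition mid : mat := mkM 1 0 0 0 1 0 0 0 1.
Definition trace (A : mat) : R := m11 A + m22 A + m33 A.
Definition det (A : mat) : R :=
  m11 A * (m22 A * m33 A - m23 A * m32 A)
  - m12 A * (m21 A * m33 A - m23 A * m31 A)
  + m13 A * (m21 A * m32 A - m22 A * m31 A).

(* hat map: hat x y = x × y *)
Definition hat (x : vec) : mat :=
  mkM 0 (- v3 x) (v2 x)
      (v3 x) 0 (- v1 x)
      (- v2 x) (v1 x) 0.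
(* vee map: inverse of hat on skew-symmetric matrices *)
Definition vee (A : mat) : vec := mkV (m32 A) (m13 A) (m21 A).

Definition SO3 (A : mat) : Prop := mmul (mT A) A = mid /\ det A = 1.

Definition symmetric (J : mat) : Prop := mT J = J.
Definition posdef (J : mat) : Prop :=
  forall x : vec, x <> vzero -> 0 < dot x (mvmul J x).
Definition is_eigenvalue (J : mat) (l : R) : Prop :=
  exists v : vec, v <> vzero /\ mvmul J v = vscale l v.
Definition is_lambda_max (J : mat) (l : R) : Prop :=
  is_eigenvalue J l /\ forall l', is_eigenvalue J l' -> l' <= l.

Definition Psi (Rm Rd : mat) : R := 2 - sqrt (1 + trace (mmul (mT Rd) Rm)).
Definition eR (Rm Rd : mat) : vec :=
  vscale (/ (2 * sqrt (1 + trace (mmul (mT Rd) Rm))))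
         (vee (msub (mmul (mT Rd) Rm) (mmul (mT Rm) Rd))).
Definition eW (Rm : mat) (W : vec) (Rd : mat) (Wd : vec) : vec :=
  vsub W (mvmul (mmul (mT Rm) Rd) Wd).

Definition control (J : mat) (kR kW : R) (Rm : mat) (W : vec)
    (Rd : mat) (Wd dWd : vec) : vec :=
  vsub (vadd (vadd (vscale (- kR) (eR Rm Rd)) (vscale (- kW) (eW Rm W Rd Wd)))
             (cross W (mvmul J W)))
       (mvmul J (vsub (mvmul (hat W) (mvmul (mmul (mT Rm) Rd) Wd))
                      (mvmul (mmul (mT Rm) Rd) dWd))).

Definition vec_deriv_at (f : R -> vec) (t : R) (d : vec) : Prop :=
  derivable_pt_lim (fun s => v1 (f s)) t (v1 d) /\
  derivable_pt_lim (fun s => v2 (f s)) t (v2 d) /\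
  derivable_pt_lim (fun s => v3 (f s)) t (v3 d).

Definition mat_deriv_at (f : R -> mat) (t : R) (d : mat) : Prop :=
  derivable_pt_lim (fun s => m11 (f s)) t (m11 d) /\
  derivable_pt_lim (fun s => m12 (f s)) t (m12 d) /\
  derivable_pt_lim (fun s => m13 (f s)) t (m13 d) /\
  derivable_pt_lim (fun s => m21 (f s)) t (m21 d) /\
  derivable_pt_lim (fun s => m22 (f s)) t (m22 d) /\
  derivable_pt_lim (fun s => m23 (f s)) t (m23 d) /\
  derivable_pt_lim (fun s => m31 (f s)) t (m31 d) /\
  derivable_pt_lim (fun s => m32 (f s)) t (m32 d) /\
  derivable_pt_lim (fun s => m33 (f s)) t (m33 d).

Definition vec_continuous (f : R -> vec) : Prop :=
  continuity (fun s => v1 (f s)) /\ continuity (fun s => v2 (f s)) /\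
  continuity (fun s => v3 (f s)).

Definition rcont0 (g : R -> R) : Prop :=
  forall eps, 0 < eps -> exists delta, 0 < delta /\
    forall s, 0 <= s < delta -> Rabs (g s - g 0) < eps.

Definition vec_rcont0 (f : R -> vec) : Prop :=
  rcont0 (fun s => v1 (f s)) /\ rcont0 (fun s => v2 (f s)) /\
  rcont0 (fun s => v3 (f s)).

Definition mat_rcont0 (f : R -> mat) : Prop :=
  rcont0 (fun s => m11 (f s)) /\ rcont0 (fun s => m12 (f s)) /\
  rcont0 (fun s => m13 (f s)) /\ rcont0 (fun s => m21 (f s)) /\
  rcont0 (fun s => m22 (f s)) /\ rcont0 (fun s => m23 (f s)) /\
  rcont0 (fun s => m31 (f s)) /\ rcont0 (fun s => m32 (f s)) /\
  rcont0 (fun s => m33 (f s)).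

(* Desired attitude command: Rd : R -> SO(3), C^2, with dRd = Rd hat(Wd),
   dWd the (continuous) derivative of Wd. *)
Definition attitude_command (Rd : R -> mat) (Wd dWd : R -> vec) : Prop :=
  (forall t, SO3 (Rd t)) /\
  (forall t, mat_deriv_at Rd t (mmul (Rd t) (hat (Wd t)))) /\
  (forall t, vec_deriv_at Wd t (dWd t)) /\
  vec_continuous dWd.

(* (Rm, W) is a solution on [0,oo) of the closed loop
   J dW + W x J W = u,  dRm = Rm hat W,
   continuous on [0,oo), differentiable on (0,oo), with Rm(0) in SO(3). *)
Definition closed_loop_solution (J : mat) (kR kW : R)
    (Rd : R -> mat) (Wd dWd : R -> vec) (Rm : R -> mat) (W : R -> vec) : Prop :=
  SO3 (Rm 0) /\ mat_rcont0 Rm /\ vec_rcont0 W /\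
  (forall t, 0 < t -> mat_deriv_at Rm t (mmul (Rm t) (hat (W t)))) /\
  (forall t, 0 < t -> exists dW : vec, vec_deriv_at W t dW /\
      vadd (mvmul J dW) (cross (W t) (mvmul J (W t)))
      = control J kR kW (Rm t) (W t) (Rd t) (Wd t) (dWd t)).

(* Main.v *)
Require Import Defs.
From Stdlib Require Import Reals Lra Psatz FunctionalExtensionality Classical ClassicalEpsilon.
Open Scope R_scope.

Definition cof (M : mat) : mat :=
  mkM (m22 M * m33 M - m23 M * m32 M) (m23 M * m31 M - m21 M * m33 M) (m21 M * m32 M - m22 M * m31 M)
      (m13 M * m32 M - m12 M * m33 M) (m11 M * m33 M - m13 M * m31 M) (m12 M * m31 M - m11 M * m32 M)
      (m12 M * m23 M - m13 M * m22 M) (m13 M * m21 M - m11 M * m23 M) (m11 M * m22 M - m12 M * m21 M).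
Definition mscale (c : R) (A : mat) : mat :=
  mkM (c * m11 A) (c * m12 A) (c * m13 A) (c * m21 A) (c * m22 A) (c * m23 A) (c * m31 A) (c * m32 A) (c * m33 A).
Definition madd (A B : mat) : mat :=
  mkM (m11 A + m11 B) (m12 A + m12 B) (m13 A + m13 B)
      (m21 A + m21 B) (m22 A + m22 B) (m23 A + m23 B)
      (m31 A + m31 B) (m32 A + m32 B) (m33 A + m33 B).
Definition outer (a b : vec) : mat :=
  mkM (v1 a * v1 b) (v1 a * v2 b) (v1 a * v3 b)
      (v2 a * v1 b) (v2 a * v2 b) (v2 a * v3 b)
      (v3 a * v1 b) (v3 a * v2 b) (v3 a * v3 b).

Ltac unf := unfold vee, hat, mvmul, mmul, msub, mT, mscale, madd, cof, mid, trace, det,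
  cross, dot, vadd, vopp, vsub, vscale, outer in *.
Ltac mring := repeat match goal with
 | M : mat |- _ => destruct M | v : vec |- _ => destruct v end;
 cbv beta iota delta [vee hat mvmul mmul msub mT mscale madd cof mid trace det cross dot vadd vopp vsub vscale outer m11 m12 m13 m21 m22 m23 m31 m32 m33 v1 v2 v3];
 lazymatch goal with |- @eq R _ _ => ring | _ => f_equal; ring end.

Lemma mat_eq (A B : mat) :
  m11 A = m11 B -> m12 A = m12 B -> m13 A = m13 B ->
  m21 A = m21 B -> m22 A = m22 B -> m23 A = m23 B ->
  m31 A = m31 B -> m32 A = m32 B -> m33 A = m33 B -> A = B.
Proof. destruct A, B; cbn; intros; subst; reflexivity. Qed.
Lemma vec_eq (a b : vec) : v1 a = v1 b -> v2 a = v2 b -> v3 a = v3 b -> a = b.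
Proof. destruct a, b; cbn; intros; subst; reflexivity. Qed.

Ltac msplit H :=
  let h1 := fresh "h" in let h2 := fresh "h" in let h3 := fresh "h" in
  let h4 := fresh "h" in let h5 := fresh "h" in let h6 := fresh "h" in
  let h7 := fresh "h" in let h8 := fresh "h" in let h9 := fresh "h" in
  pose proof (f_equal m11 H) as h1; pose proof (f_equal m12 H) as h2;
  pose proof (f_equal m13 H) as h3; pose proof (f_equal m21 H) as h4;
  pose proof (f_equal m22 H) as h5; pose proof (f_equal m23 H) as h6;
  pose proof (f_equal m31 H) as h7; pose proof (f_equal m32 H) as h8;
  pose proof (f_equal m33 H) as h9; cbn in h1, h2, h3, h4, h5, h6, h7, h8, h9.

Lemma mmul_assoc A B C : mmul A (mmul B C) = mmul (mmul A B) C.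
Proof. mring. Qed.
Lemma mmul_id_l A : mmul mid A = A.
Proof. mring. Qed.
Lemma mT_mT A : mT (mT A) = A.
Proof. mring. Qed.
Lemma cof_adj M : mmul M (mT (cof M)) = mscale (det M) mid.
Proof. mring. Qed.
Lemma mscale1 A : mscale 1 A = A.
Proof. mring. Qed.
Lemma mmul_scale_r A k B : mmul A (mscale k B) = mscale k (mmul A B).
Proof. mring. Qed.
Lemma mmul_id_r A : mmul A mid = A.
Proof. mring. Qed.

Lemma so3_cof Q : SO3 Q -> cof Q = Q.
Proof.
  intros [H1 H2].
  assert (E : mT (cof Q) = mT Q).
  { rewrite <- (mmul_id_l (mT (cof Q))), <- H1, <- mmul_assoc, cof_adj, H2,
       mscale1, mmul_id_r. reflexivity. }
  rewrite <- (mT_mT (cof Q)), E, mT_mT. reflexivity.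
Qed.

Lemma so3_QQT Q : SO3 Q -> mmul Q (mT Q) = mid.
Proof.
  intros H. pose proof (cof_adj Q) as E. rewrite (so3_cof Q H) in E.
  destruct H as [_ H2]. rewrite E, H2, mscale1. reflexivity.
Qed.

Lemma CH M : mmul M (mmul M M) =
  madd (mscale (trace M) (mmul M M))
    (madd (mscale (- trace (cof M)) M) (mscale (det M) mid)).
Proof. mring. Qed.
Lemma mmul_madd_r A B C : mmul A (madd B C) = madd (mmul A B) (mmul A C).
Proof. mring. Qed.

Lemma so3_sq Q : SO3 Q ->
  mmul Q Q = madd (mscale (trace Q) Q) (madd (mscale (- trace Q) mid) (mT Q)).
Proof.
  intros H. pose proof (f_equal (mmul (mT Q)) (CH Q)) as E. pose proof (so3_cof Q H) as Hc.
  destruct H as [H1 H2]. cbv beta in E.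
  rewrite !mmul_madd_r, !mmul_scale_r, !mmul_assoc, H1, !mmul_id_l, mmul_id_r,
    Hc, H2, mscale1 in E. exact E.
Qed.

Lemma det_mT A : det (mT A) = det A.
Proof. mring. Qed.
Lemma det_mmul A B : det (mmul A B) = det A * det B.
Proof. mring. Qed.
Lemma mT_mmul A B : mT (mmul A B) = mmul (mT B) (mT A).
Proof. mring. Qed.

Lemma so3_rel A B : SO3 A -> SO3 B -> SO3 (mmul (mT A) B).
Proof.
  intros HA HB. pose proof (so3_QQT A HA) as EA.
  destruct HA as [HA1 HA2], HB as [HB1 HB2]. split.
  - rewrite mT_mmul, mT_mT, <- mmul_assoc, (mmul_assoc A), EA, mmul_id_l. exact HB1.
  - rewrite det_mmul, det_mT, HA2, HB2. ring.
Qed.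

Lemma so3_K Q : SO3 Q ->
  outer (vee (msub Q (mT Q))) (vee (msub Q (mT Q))) =
  mscale (1 + trace Q) (msub (madd Q (mT Q)) (mscale (trace Q - 1) mid)).
Proof.
  intros H. pose proof (so3_sq Q H) as E1. pose proof (so3_QQT Q H) as E2.
  destruct H as [E3 _]. destruct Q. unf. cbn in *.
  msplit E1. msplit E2. msplit E3.
  apply mat_eq; cbn; lra.
Qed.

Lemma so3_qq Q : SO3 Q ->
  dot (vee (msub Q (mT Q))) (vee (msub Q (mT Q))) = (1 + trace Q) * (3 - trace Q).
Proof.
  intros H. pose proof (so3_K Q H) as K. msplit K.
  destruct Q. unf. cbn in *. lra.
Qed.

Lemma D_ext f t l l' : derivable_pt_lim f t l -> l = l' -> derivable_pt_lim f t l'.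
Proof. intros H ->; exact H. Qed.
Lemma D_plus f g t a b : derivable_pt_lim f t a -> derivable_pt_lim g t b ->
  derivable_pt_lim (fun s => f s + g s) t (a + b).
Proof. intros; apply (derivable_pt_lim_plus f g); assumption. Qed.
Lemma D_minus f g t a b : derivable_pt_lim f t a -> derivable_pt_lim g t b ->
  derivable_pt_lim (fun s => f s - g s) t (a - b).
Proof. intros; apply (derivable_pt_lim_minus f g); assumption. Qed.
Lemma D_mult f g t a b : derivable_pt_lim f t a -> derivable_pt_lim g t b ->
  derivable_pt_lim (fun s => f s * g s) t (a * g t + f t * b).
Proof. intros; apply (derivable_pt_lim_mult f g); assumption. Qed.
Lemma D_opp f t a : derivable_pt_lim f t a -> derivable_pt_lim (fun s => - f s) t (- a).
Proof. intros; apply (derivable_pt_lim_opp f); assumption. Qed.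
Lemma D_const c t : derivable_pt_lim (fun _ => c) t 0.
Proof. apply (derivable_pt_lim_const c). Qed.
Lemma D_id t : derivable_pt_lim (fun s => s) t 1.
Proof. apply derivable_pt_lim_id. Qed.
Lemma D_cmult c f t a : derivable_pt_lim f t a -> derivable_pt_lim (fun s => c * f s) t (c * a).
Proof. intros H. eapply D_ext. apply (D_mult (fun _ => c) f). apply D_const. exact H. ring. Qed.
Lemma D_inv f t a : derivable_pt_lim f t a -> f t <> 0 ->
  derivable_pt_lim (fun s => / f s) t (- a / (f t * f t)).
Proof.
  intros H Hn. pose proof (derivable_pt_lim_div (fun _ => 1) f t 0 a (D_const 1 t) H Hn) as E.
  eapply D_ext. replace (fun s => / f s) with (((fun _ : R => 1) / f)%F).
  exact E. apply functional_extensionality; intro s; unfold div_fct; unfold Rdiv; ring.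
  unfold Rsqr; field; exact Hn.
Qed.
Lemma D_sqrt f t a : derivable_pt_lim f t a -> 0 < f t ->
  derivable_pt_lim (fun s => sqrt (f s)) t (/ (2 * sqrt (f t)) * a).
Proof.
  intros H Hp. pose proof (derivable_pt_lim_comp f sqrt t a _ H (derivable_pt_lim_sqrt _ Hp)) as E.
  eapply D_ext. exact E. ring.
Qed.
Lemma D_exp f t a : derivable_pt_lim f t a ->
  derivable_pt_lim (fun s => exp (f s)) t (exp (f t) * a).
Proof.
  intros H. pose proof (derivable_pt_lim_comp f exp t a _ H (derivable_pt_lim_exp _)) as E.
  exact E.
Qed.

Ltac dsolve := repeat first [ apply D_plus | apply D_minus | apply D_mult | apply D_opp
  | apply D_const | eassumption ].

Definition vderiv := vec_deriv_at.
Definition mderiv := mat_deriv_at.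

Lemma md_mmul A B dA dB t : mat_deriv_at A t dA -> mat_deriv_at B t dB ->
  mat_deriv_at (fun s => mmul (A s) (B s)) t (madd (mmul dA (B t)) (mmul (A t) dB)).
Proof.
  intros (a1&a2&a3&a4&a5&a6&a7&a8&a9) (b1&b2&b3&b4&b5&b6&b7&b8&b9).
  unfold mat_deriv_at; cbn.
  repeat split; (eapply D_ext; [ dsolve | cbn; ring ]).
Qed.
Lemma md_mT A dA t : mat_deriv_at A t dA -> mat_deriv_at (fun s => mT (A s)) t (mT dA).
Proof.
  intros (a1&a2&a3&a4&a5&a6&a7&a8&a9). unfold mat_deriv_at; cbn. tauto.
Qed.
Lemma md_msub A B dA dB t : mat_deriv_at A t dA -> mat_deriv_at B t dB ->
  mat_deriv_at (fun s => msub (A s) (B s)) t (msub dA dB).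
Proof.
  intros (a1&a2&a3&a4&a5&a6&a7&a8&a9) (b1&b2&b3&b4&b5&b6&b7&b8&b9).
  unfold mat_deriv_at; cbn.
  repeat split; (eapply D_ext; [ dsolve | cbn; ring ]).
Qed.
Lemma vd_vee A dA t : mat_deriv_at A t dA -> vec_deriv_at (fun s => vee (A s)) t (vee dA).
Proof. intros (a1&a2&a3&a4&a5&a6&a7&a8&a9). unfold vec_deriv_at; cbn. tauto. Qed.
Lemma sd_trace A dA t : mat_deriv_at A t dA -> derivable_pt_lim (fun s => trace (A s)) t (trace dA).
Proof. intros (a1&a2&a3&a4&a5&a6&a7&a8&a9). unfold trace. dsolve. Qed.
Lemma vd_mvmul A x dA dx t : mat_deriv_at A t dA -> vec_deriv_at x t dx ->
  vec_deriv_at (fun s => mvmul (A s) (x s)) t (vadd (mvmul dA (x t)) (mvmul (A t) dx)).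
Proof.
  intros (a1&a2&a3&a4&a5&a6&a7&a8&a9) (b1&b2&b3).
  unfold vec_deriv_at; cbn.
  repeat split; (eapply D_ext; [ dsolve | cbn; ring ]).
Qed.
Lemma vd_cmvmul (A : mat) x dx t : vec_deriv_at x t dx ->
  vec_deriv_at (fun s => mvmul A (x s)) t (mvmul A dx).
Proof.
  intros (b1&b2&b3).
  unfold vec_deriv_at; cbn.
  repeat split; (eapply D_ext; [ dsolve | cbn; ring ]).
Qed.
Lemma vd_vsub x y dx dy t : vec_deriv_at x t dx -> vec_deriv_at y t dy ->
  vec_deriv_at (fun s => vsub (x s) (y s)) t (vsub dx dy).
Proof.
  intros (a1&a2&a3) (b1&b2&b3).
  unfold vec_deriv_at; cbn.
  repeat split; (eapply D_ext; [ dsolve | cbn; ring ]).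
Qed.
Lemma vd_vscale f x df dx t : derivable_pt_lim f t df -> vec_deriv_at x t dx ->
  vec_deriv_at (fun s => vscale (f s) (x s)) t (vadd (vscale df (x t)) (vscale (f t) dx)).
Proof.
  intros H (b1&b2&b3).
  unfold vec_deriv_at; cbn.
  repeat split; (eapply D_ext; [ dsolve | cbn; ring ]).
Qed.
Lemma sd_dot x y dx dy t : vec_deriv_at x t dx -> vec_deriv_at y t dy ->
  derivable_pt_lim (fun s => dot (x s) (y s)) t (dot dx (y t) + dot (x t) dy).
Proof.
  intros (a1&a2&a3) (b1&b2&b3). unfold dot.
  eapply D_ext; [ dsolve | cbn; ring ].
Qed.


Lemma rc0_lim g : rcont0 g <-> limit1_in g (fun s => 0 <= s) (g 0) 0.
Proof.
  unfold rcont0, limit1_in, limit_in; cbn; unfold R_dist; split.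
  - intros H eps He. destruct (H eps He) as [d [Hd H']]. exists d; split; [lra|].
    intros x [Hx1 Hx2]. apply H'. rewrite Rminus_0_r in Hx2.
    rewrite Rabs_right in Hx2 by lra. lra.
  - intros H eps He. destruct (H eps He) as [d [Hd H']]. exists d; split; [lra|].
    intros x [Hx1 Hx2]. apply H'. split; [lra|]. rewrite Rminus_0_r, Rabs_right; lra.
Qed.

Lemma rc0_plus f g : rcont0 f -> rcont0 g -> rcont0 (fun s => f s + g s).
Proof. rewrite !rc0_lim. intros. apply limit_plus; assumption. Qed.
Lemma rc0_mult f g : rcont0 f -> rcont0 g -> rcont0 (fun s => f s * g s).
Proof. rewrite !rc0_lim. intros. apply limit_mul; assumption. Qed.
Lemma rc0_const c : rcont0 (fun _ => c).
Proof. intros eps He. exists 1. split; [lra|]. intros. rewrite Rminus_diag, Rabs_R0. lra. Qed.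
Lemma rc0_opp f : rcont0 f -> rcont0 (fun s => - f s).
Proof.
  intros H. replace (fun s => - f s) with (fun s => (-1) * f s).
  apply rc0_mult; [apply rc0_const | exact H].
  apply functional_extensionality; intro; ring.
Qed.
Lemma rc0_minus f g : rcont0 f -> rcont0 g -> rcont0 (fun s => f s - g s).
Proof. intros. apply rc0_plus; [ | apply rc0_opp]; assumption. Qed.
Lemma rc0_comp f h : rcont0 f -> continuity_pt h (f 0) -> rcont0 (fun s => h (f s)).
Proof.
  intros H Hc eps He.
  destruct (Hc eps He) as [d [Hd H']]. cbn in H'. unfold R_dist in H'.
  destruct (H d Hd) as [d2 [Hd2 H2]]. exists d2; split; [lra|].
  intros s Hs. destruct (Req_dec (f s) (f 0)) as [E|E].
  - rewrite E, Rminus_diag, Rabs_R0; lra.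
  - apply H'. split. split. exact I. auto. apply H2; exact Hs.
Qed.
Lemma rc0_of_cont f : continuity_pt f 0 -> rcont0 f.
Proof.
  intros Hc eps He. destruct (Hc eps He) as [d [Hd H']]. cbn in H'. unfold R_dist in H'.
  exists d; split; [lra|]. intros s Hs. destruct (Req_dec s 0) as [E|E].
  - subst; rewrite Rminus_diag, Rabs_R0; lra.
  - apply H'. split. split. exact I. auto. rewrite Rminus_0_r, Rabs_right; lra.
Qed.
Lemma cont_of_deriv f t l : derivable_pt_lim f t l -> continuity_pt f t.
Proof. intros H. apply derivable_continuous_pt. exists l. exact H. Qed.
Lemma rc0_of_deriv f l : derivable_pt_lim f 0 l -> rcont0 f.
Proof. intros H; apply rc0_of_cont; eapply cont_of_deriv; eauto. Qed.
Lemma rc0_sqrt f : rcont0 f -> 0 < f 0 -> rcont0 (fun s => sqrt (f s)).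
Proof. intros H Hp. apply rc0_comp; [exact H | apply continuity_pt_sqrt; lra]. Qed.
Lemma rc0_inv f : rcont0 f -> f 0 <> 0 -> rcont0 (fun s => / f s).
Proof.
  intros H Hp. apply (rc0_comp f Rinv H).
  apply (continuity_pt_inv (fun x => x)). apply derivable_continuous_pt, derivable_pt_id. exact Hp.
Qed.
Lemma rc0_ext f g : (forall s, f s = g s) -> rcont0 f -> rcont0 g.
Proof. intros E H. replace g with f; [exact H|]. apply functional_extensionality; exact E. Qed.

Ltac rcsolve := repeat first [ apply rc0_plus | apply rc0_minus | apply rc0_mult | apply rc0_opp
  | apply rc0_const | eassumption ].

Lemma mr_mmul A B : mat_rcont0 A -> mat_rcont0 B -> mat_rcont0 (fun s => mmul (A s) (B s)).
Proof.
  intros (a1&a2&a3&a4&a5&a6&a7&a8&a9) (b1&b2&b3&b4&b5&b6&b7&b8&b9).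
  unfold mat_rcont0; cbn. repeat split; rcsolve.
Qed.
Lemma mr_mT A : mat_rcont0 A -> mat_rcont0 (fun s => mT (A s)).
Proof. intros (a1&a2&a3&a4&a5&a6&a7&a8&a9). unfold mat_rcont0; cbn; tauto. Qed.
Lemma mr_msub A B : mat_rcont0 A -> mat_rcont0 B -> mat_rcont0 (fun s => msub (A s) (B s)).
Proof.
  intros (a1&a2&a3&a4&a5&a6&a7&a8&a9) (b1&b2&b3&b4&b5&b6&b7&b8&b9).
  unfold mat_rcont0; cbn. repeat split; rcsolve.
Qed.
Lemma vr_vee A : mat_rcont0 A -> vec_rcont0 (fun s => vee (A s)).
Proof. intros (a1&a2&a3&a4&a5&a6&a7&a8&a9). unfold vec_rcont0; cbn. tauto. Qed.
Lemma sr_trace A : mat_rcont0 A -> rcont0 (fun s => trace (A s)).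
Proof. intros (a1&a2&a3&a4&a5&a6&a7&a8&a9). unfold trace. rcsolve. Qed.
Lemma vr_mvmul A x : mat_rcont0 A -> vec_rcont0 x -> vec_rcont0 (fun s => mvmul (A s) (x s)).
Proof.
  intros (a1&a2&a3&a4&a5&a6&a7&a8&a9) (b1&b2&b3).
  unfold vec_rcont0; cbn. repeat split; rcsolve.
Qed.
Lemma vr_cmvmul (A : mat) x : vec_rcont0 x -> vec_rcont0 (fun s => mvmul A (x s)).
Proof.
  intros (b1&b2&b3). unfold vec_rcont0; cbn. repeat split; rcsolve.
Qed.
Lemma vr_vsub x y : vec_rcont0 x -> vec_rcont0 y -> vec_rcont0 (fun s => vsub (x s) (y s)).
Proof.
  intros (a1&a2&a3) (b1&b2&b3). unfold vec_rcont0; cbn. repeat split; rcsolve.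
Qed.
Lemma vr_vscale f x : rcont0 f -> vec_rcont0 x -> vec_rcont0 (fun s => vscale (f s) (x s)).
Proof.
  intros H (b1&b2&b3). unfold vec_rcont0; cbn. repeat split; rcsolve.
Qed.
Lemma sr_dot x y : vec_rcont0 x -> vec_rcont0 y -> rcont0 (fun s => dot (x s) (y s)).
Proof.
  intros (a1&a2&a3) (b1&b2&b3). unfold dot. rcsolve.
Qed.
Lemma mr_of_deriv A : (forall t, exists d, mat_deriv_at A t d) -> mat_rcont0 A.
Proof.
  intros H. destruct (H 0) as [d (a1&a2&a3&a4&a5&a6&a7&a8&a9)].
  repeat split; eapply rc0_of_deriv; eassumption.
Qed.
Lemma vr_of_deriv x : (forall t, exists d, vec_deriv_at x t d) -> vec_rcont0 x.
Proof.
  intros H. destruct (H 0) as [d (a1&a2&a3)].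
  repeat split; eapply rc0_of_deriv; eassumption.
Qed.

Lemma nonincr f a b : a < b ->
  (forall x, a <= x <= b -> exists d, derivable_pt_lim f x d /\ d <= 0) -> f b <= f a.
Proof.
  intros Hab H.
  assert (Ex : forall x, exists d, a <= x <= b -> derivable_pt_lim f x d /\ d <= 0).
  { intros x. destruct (classic (a <= x <= b)) as [Hx|Hx].
    - destruct (H x Hx) as [d Hd]. exists d; intros; exact Hd.
    - exists 0; intros; contradiction. }
  destruct (choice _ Ex) as [f' Hf'].
  destruct (MVT_cor2 f f' a b Hab) as [c [Hc1 Hc2]].
  { intros c Hc. apply (Hf' c Hc). }
  assert (f' c <= 0) by (apply (Hf' c); lra).
  assert (f' c * (b - a) <= 0) by nra.
  lra.
Qed.

Lemma nonincr0 f t : 0 <= t -> rcont0 f ->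
  (forall u, 0 < u <= t -> exists d, derivable_pt_lim f u d /\ d <= 0) -> f t <= f 0.
Proof.
  intros Ht Hc H. destruct (Req_dec t 0) as [->|Hne]; [lra|].
  destruct (Rle_dec (f t) (f 0)) as [|Hgt]; [assumption|]. exfalso.
  destruct (Hc (f t - f 0)) as [d [Hd Hd']]; [lra|].
  set (a := Rmin (d/2) (t/2)).
  assert (Ha1 : 0 < a) by (unfold a; apply Rmin_glb_lt; lra).
  assert (Ha2 : a <= d/2) by apply Rmin_l.
  assert (Ha3 : a <= t/2) by apply Rmin_r.
  assert (f t <= f a).
  { apply nonincr; [lra|]. intros x Hx. apply H; lra. }
  specialize (Hd' a ltac:(lra)). apply Rabs_def2 in Hd'. lra.
Qed.

Lemma rc_at g tau : 0 <= tau -> rcont0 g -> (forall t, 0 < t -> continuity_pt g t) ->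
  forall eps, 0 < eps -> exists d, 0 < d /\ forall u, tau <= u < tau + d -> Rabs (g u - g tau) < eps.
Proof.
  intros Ht Hr Hc eps He. destruct (Req_dec tau 0) as [->|Hne].
  - destruct (Hr eps He) as [d [Hd H]]. exists d; split; [lra|]. intros u Hu; apply H; lra.
  - destruct (Hc tau ltac:(lra) eps He) as [d [Hd H]]. cbn in H; unfold R_dist in H.
    exists d; split; [lra|]. intros u Hu. destruct (Req_dec u tau) as [->|Hu'].
    + rewrite Rminus_diag, Rabs_R0; lra.
    + apply H. split. split. exact I. auto. rewrite Rabs_right; lra.
Qed.

Lemma barrier g a : rcont0 g -> (forall t, 0 < t -> continuity_pt g t) -> 0 < g 0 -> 0 < a ->
  (forall t, 0 < t -> (forall u, 0 <= u <= t -> 0 < g u) -> a <= g t) ->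
  forall t, 0 <= t -> 0 < g t.
Proof.
  intros Hr Hc H0 Ha H t1 Ht1.
  destruct (Rlt_dec 0 (g t1)) as [|Hneg]; [assumption|]. exfalso.
  assert (Ht1p : 0 < t1). { destruct (Req_dec t1 0) as [->|]; lra. }
  set (E := fun x => 0 <= x <= t1 /\ forall u, 0 <= u <= x -> 0 < g u).
  assert (Hb : bound E). { exists t1. intros x [Hx _]. lra. }
  assert (He : exists x, E x). { exists 0. split; [lra|]. intros u Hu. replace u with 0 by lra. exact H0. }
  destruct (completeness E Hb He) as [tau [Hub Hlub]].
  assert (Htau0 : 0 <= tau) by (apply Hub; split; [lra|]; intros u Hu; replace u with 0 by lra; exact H0).
  assert (Htau1 : tau <= t1) by (apply Hlub; intros x [Hx _]; lra).
  assert (C1 : forall u, 0 <= u < tau -> 0 < g u).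
  { intros u Hu. destruct (classic (exists x, E x /\ u < x)) as [[x [[_ Hx] Hux]]|Hno].
    - apply Hx; lra.
    - exfalso. assert (tau <= u). { apply Hlub. intros x Ex. destruct (Rle_dec x u); [assumption|].
        exfalso; apply Hno; exists x; split; [assumption|lra]. } lra. }
  assert (C2 : 0 < g tau).
  { destruct (Req_dec tau 0) as [->|Hne]; [exact H0|].
    destruct (Rle_dec a (g tau)) as [|Hlt]; [lra|]. exfalso.
    destruct (Hc tau ltac:(lra) (a - g tau)) as [d [Hd Hd']]; [lra|]. cbn in Hd'; unfold R_dist in Hd'.
    set (u := Rmax (tau - d/2) (tau/2)).
    assert (Hu1 : tau - d/2 <= u) by apply Rmax_l.
    assert (Hu2 : tau/2 <= u) by apply Rmax_r.
    assert (Hu3 : u < tau) by (unfold u; apply Rmax_lub_lt; lra).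
    assert (a <= g u). { apply H; [lra|]. intros v Hv. apply C1; lra. }
    assert (Rabs (g u - g tau) < a - g tau).
    { apply Hd'. split. split. exact I. lra. rewrite Rabs_left; lra. }
    apply Rabs_def2 in H2. lra. }
  destruct (Req_dec tau t1) as [->|Hne]; [lra|].
  destruct (rc_at g tau Htau0 Hr Hc (g tau) C2) as [d [Hd Hd']].
  set (x := Rmin (tau + d/2) t1).
  assert (Hx1 : x <= tau + d/2) by apply Rmin_l.
  assert (Hx2 : x <= t1) by apply Rmin_r.
  assert (Hx3 : tau < x) by (unfold x; apply Rmin_glb_lt; lra).
  assert (E x).
  { split; [lra|]. intros u Hu. destruct (Rlt_dec u tau) as [|Hge]; [apply C1; lra|].
    destruct (Req_dec u tau) as [->|]; [exact C2|].
    specialize (Hd' u ltac:(lra)). apply Rabs_def2 in Hd'. lra. }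
  specialize (Hub x H1). lra.
Qed.

Lemma mul_nonpos x y : 0 <= x -> y <= 0 -> x*y <= 0.
Proof. intros; nra. Qed.

Lemma ldl a b c d f g x1 x2 x3 : 0 < a -> 0 < a*d - b*b ->
  0 < a*(d*g - f*f) - b*(b*g - f*c) + c*(b*f - d*c) ->
  0 <= a*x1*x1 + d*x2*x2 + g*x3*x3 + 2*b*x1*x2 + 2*c*x1*x3 + 2*f*x2*x3.
Proof.
  intros Ha Hm HD. set (m2 := a*d - b*b) in *. set (D := a*(d*g - f*f) - b*(b*g - f*c) + c*(b*f - d*c)) in *.
  set (Q := a*x1*x1 + d*x2*x2 + g*x3*x3 + 2*b*x1*x2 + 2*c*x1*x3 + 2*f*x2*x3).
  assert (E : a*m2*Q = m2*(a*x1 + b*x2 + c*x3)^2 + (m2*x2 + (a*f - b*c)*x3)^2 + a*D*x3^2)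
    by (unfold m2, D, Q; ring).
  assert (0 <= m2*(a*x1 + b*x2 + c*x3)^2 + (m2*x2 + (a*f - b*c)*x3)^2 + a*D*x3^2).
  { pose proof (pow2_ge_0 (a*x1 + b*x2 + c*x3)). pose proof (pow2_ge_0 (m2*x2 + (a*f - b*c)*x3)).
    pose proof (pow2_ge_0 x3). assert (0 < a * D) by (apply Rmult_lt_0_compat; lra). nra. }
  assert (0 < a * m2) by nra.
  destruct (Rle_dec 0 Q) as [|HQ]; [assumption|]. exfalso. nra.
Qed.

Lemma kernel N : det N = 0 -> exists x, x <> vzero /\ mvmul N x = vzero.
Proof.
  intros Hd. destruct N as [a b c d e f g h i]. unfold det in Hd; cbn in Hd.
  Ltac cand x := let Z := fresh "Z" in let Hx := fresh "Hx" in
    destruct (classic (x = vzero)) as [Z|Hx];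
    [ pose proof (f_equal v1 Z); pose proof (f_equal v2 Z); pose proof (f_equal v3 Z);
      cbn in *; clear Z
    | exists x; split; [exact Hx | apply vec_eq; cbn; lra] ].
  cand (mkV (e*i - f*h) (f*g - d*i) (d*h - e*g)).
  cand (mkV (c*h - b*i) (a*i - c*g) (b*g - a*h)).
  cand (mkV (b*f - c*e) (c*d - a*f) (a*e - b*d)).
  cand (mkV 0 c (-b)). cand (mkV (-c) 0 a).
  cand (mkV 0 f (-e)). cand (mkV (-f) 0 d).
  cand (mkV 0 i (-h)). cand (mkV (-i) 0 g).
  exists (mkV 1 0 0). split.
  - intro Z. pose proof (f_equal v1 Z). cbn in *. lra.
  - apply vec_eq; cbn; lra.
Qed.

Definition qf (J : mat) (x : vec) := dot x (mvmul J x).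

Section JB.
Variable J : mat.
Hypothesis Hs : symmetric J.

Local Notation a := (m11 J). Local Notation b := (m12 J). Local Notation c := (m13 J).
Local Notation d := (m22 J). Local Notation f := (m23 J). Local Notation g := (m33 J).

Lemma sym_eqs : m21 J = b /\ m31 J = c /\ m32 J = f.
Proof. unfold symmetric in Hs. pose proof (f_equal m12 Hs); pose proof (f_equal m13 Hs);
  pose proof (f_equal m23 Hs). cbn in *. auto. Qed.

Definition charp (l : R) := det (msub (mscale l mid) J).

Lemma charp_eq l : charp l = (l - g) * ((l - a)*(l - d) - b*b)
   - ((l - d)*c*c + 2*b*c*f + (l - a)*f*f).
Proof. destruct sym_eqs as (E1&E2&E3). unfold charp, det in *. cbn.
  rewrite E1, E2, E3. ring. Qed.

Lemma qf_eq x : qf J x = a*v1 x*v1 x + d*v2 x*v2 x + g*v3 x*v3 x + 2*b*v1 x*v2 x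
   + 2*c*v1 x*v3 x + 2*f*v2 x*v3 x.
Proof. destruct sym_eqs as (E1&E2&E3). unfold qf, dot in *. cbn.
  rewrite E1, E2, E3. ring. Qed.

Section LM.
Variable lmax : R.
Hypothesis Hl : is_lambda_max J lmax.

Lemma P1 l : charp l = 0 -> l <= lmax.
Proof.
  intros H. destruct (kernel _ H) as [x [Hx E]]. destruct Hl as [_ Hmax]. apply Hmax.
  exists x. split; [exact Hx|]. pose proof (f_equal v1 E); pose proof (f_equal v2 E);
  pose proof (f_equal v3 E). destruct J; cbn in *. apply vec_eq; cbn; lra.
Qed.

Lemma charp_cont : continuity charp.
Proof.
  assert (E : charp = fun l => (l - g) * ((l - a)*(l - d) - b*b)
   - ((l - d)*c*c + 2*b*c*f + (l - a)*f*f)).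
  { apply FunctionalExtensionality.functional_extensionality; apply charp_eq. }
  rewrite E. reg.
Qed.

Lemma charp_large : exists L, forall l, L <= l -> 0 < charp l.
Proof.
  set (t := a + d + g). set (s2 := a*d - b*b + a*g - c*c + d*g - f*f).
  set (D := a*(d*g - f*f) - b*(b*g - f*c) + c*(b*f - d*c)).
  exists (1 + Rabs t + Rabs s2 + Rabs D). intros l Hl0.
  assert (E : charp l = l^3 - t*l^2 + s2*l - D) by (rewrite charp_eq; unfold t, s2, D; ring).
  rewrite E.
  pose proof (Rabs_pos t); pose proof (Rabs_pos s2); pose proof (Rabs_pos D).
  pose proof (Rle_abs t); pose proof (Rle_abs (-s2)); pose proof (Rle_abs D).
  rewrite Rabs_Ropp in *.
  assert (1 <= l) by lra.
  assert (Hl2 : 1 <= l^2) by nra.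
  assert (t*l^2 <= Rabs t * l^2) by (apply Rmult_le_compat_r; lra).
  assert (- s2 * l <= Rabs s2 * l) by (apply Rmult_le_compat_r; lra).
  assert (Rabs s2 * l <= Rabs s2 * l^2) by (apply Rmult_le_compat_l; nra).
  assert (Rabs D <= Rabs D * l^2) by nra.
  assert (l^3 = l * l^2) by ring.
  assert (l * l^2 - Rabs t * l^2 - Rabs s2 * l^2 - Rabs D * l^2 = l^2 * (l - Rabs t - Rabs s2 - Rabs D)) by ring.
  assert (0 < l^2 * (l - Rabs t - Rabs s2 - Rabs D)) by (apply Rmult_lt_0_compat; lra).
  lra.
Qed.

Lemma P2 l : lmax < l -> 0 < charp l.
Proof.
  intros Hlt. destruct (Rlt_dec 0 (charp l)) as [|Hn]; [assumption|]. exfalso.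
  destruct (Req_dec (charp l) 0) as [Z|Z]; [apply P1 in Z; lra|].
  destruct charp_large as [L HL].
  set (L' := Rmax (l + 1) L).
  destruct (IVT charp l L' charp_cont) as [z [Hz Hz0]].
  - unfold L'; pose proof (Rmax_l (l+1) L); lra.
  - lra.
  - apply HL; apply Rmax_r.
  - apply P1 in Hz0. lra.
Qed.

Lemma P3 l : lmax < l -> 0 < (l - a)*(l - d) - b*b.
Proof.
  intros Hlt. destruct (Rlt_dec 0 ((l - a)*(l - d) - b*b)) as [|Hn]; [assumption|]. exfalso.
  set (h := (a + d)/2). set (D := ((a - d)/2)^2 + b*b).
  assert (HD : 0 <= D) by (unfold D; pose proof (pow2_ge_0 ((a-d)/2)); pose proof (Rle_0_sqr b); unfold Rsqr in *; lra).
  set (mu := h + sqrt D).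
  pose proof (sqrt_sqrt D HD) as Hsq. pose proof (sqrt_pos D).
  assert (Hm2 : (mu - a)*(mu - d) - b*b = 0).
  { assert (E : (mu - a)*(mu - d) - b*b = sqrt D * sqrt D - D) by (unfold mu, h, D; field).
    rewrite Hsq in E. lra. }
  assert (H1 : l <= mu).
  { assert ((l - h)^2 <= D).
    { assert (E : (l - h)^2 - D = (l - a)*(l - d) - b*b) by (unfold h, D; field). lra. }
    assert (l - h <= sqrt D).
    { destruct (Rle_dec (l - h) 0); [lra|].
      rewrite <- (sqrt_pow2 (l - h)) by lra. apply sqrt_le_1_alt; lra. }
    unfold mu; lra. }
  assert (Hsa : Rabs ((a - d)/2) <= sqrt D).
  { rewrite <- sqrt_Rsqr_abs. apply sqrt_le_1_alt. unfold Rsqr, D. pose proof (Rle_0_sqr b); unfold Rsqr in *. lra. }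
  pose proof (Rle_abs ((a-d)/2)). pose proof (Rle_abs (-((a-d)/2))). rewrite Rabs_Ropp in *.
  assert (Ha : 0 <= mu - a) by (unfold mu, h; lra).
  assert (Hd : 0 <= mu - d) by (unfold mu, h; lra).
  assert (Hq : 0 <= (mu - d)*c*c + 2*b*c*f + (mu - a)*f*f).
  { destruct (Req_dec (mu - d) 0) as [Z|Z].
    - assert (Hb : b * b = 0) by (rewrite Z in Hm2; lra).
      assert (Hb0 : b = 0) by (apply Rsqr_0_uniq; exact Hb).
      rewrite Z, Hb0. pose proof (Rle_0_sqr f). unfold Rsqr in *.
      assert (0 <= (mu - a) * (f * f)) by (apply Rmult_le_pos; lra). lra.
    - assert (0 < mu - d) by lra.
      assert (E : (mu - d)*((mu - d)*c*c + 2*b*c*f + (mu - a)*f*f) = ((mu-d)*c + b*f)^2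
        + ((mu - a)*(mu - d) - b*b)*f*f) by ring.
      rewrite Hm2 in E.
      pose proof (pow2_ge_0 ((mu-d)*c + b*f)).
      destruct (Rle_dec 0 ((mu - d)*c*c + 2*b*c*f + (mu - a)*f*f)) as [|Hn']; [assumption|].
      assert ((mu - d)*((mu - d)*c*c + 2*b*c*f + (mu - a)*f*f) < 0)
        by (apply Rmult_pos_neg; lra). lra. }
  assert (charp mu <= 0) by (rewrite charp_eq; rewrite Hm2; lra).
  pose proof (P2 mu ltac:(lra)). lra.
Qed.

Lemma P4 l : lmax < l -> 0 < l - a.
Proof.
  intros Hlt. destruct (Rlt_dec 0 (l - a)) as [|Hn]; [assumption|]. exfalso.
  pose proof (P3 a ltac:(lra)). nra.
Qed.

Lemma lmax_bound x : qf J x <= lmax * dot x x.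
Proof.
  assert (Hlt : forall l, lmax < l -> qf J x <= l * dot x x).
  { intros l Hl'. pose proof (P2 l Hl') as H2. pose proof (P3 l Hl') as H3. pose proof (P4 l Hl') as H4.
    rewrite charp_eq in H2.
    pose proof (ldl (l - a) (-b) (-c) (l - d) (-f) (l - g) (v1 x) (v2 x) (v3 x) H4
      ltac:(nra) ltac:(nra)).
    rewrite qf_eq. unfold dot. nra. }
  destruct (Rle_dec (qf J x) (lmax * dot x x)) as [|Hn]; [assumption|]. exfalso.
  assert (Hp : 0 <= dot x x) by (unfold dot; nra).
  set (del := (qf J x - lmax * dot x x) / (2 * (dot x x + 1))).
  assert (0 < del) by (unfold del; apply Rdiv_lt_0_compat; lra).
  specialize (Hlt (lmax + del) ltac:(lra)).
  assert (del * dot x x < qf J x - lmax * dot x x).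
  { unfold del. apply Rmult_lt_reg_r with (2 * (dot x x + 1)); [lra|].
    field_simplify; [|lra]. nra. }
  nra.
Qed.
End LM.

Hypothesis Hp : posdef J.

Lemma pd_facts : 0 < a /\ 0 < d /\ 0 < a*d - b*b /\ 0 < a*(d*g - f*f) - b*(b*g - f*c) + c*(b*f - d*c).
Proof.
  assert (Ha : 0 < a).
  { pose proof (Hp (mkV 1 0 0)) as H. unfold qf in H. fold (qf J (mkV 1 0 0)) in H.
    rewrite qf_eq in H. cbn in H. specialize (H ltac:(intro Z; injection Z; lra)). lra. }
  assert (Hd : 0 < d).
  { pose proof (Hp (mkV 0 1 0)) as H. fold (qf J (mkV 0 1 0)) in H.
    rewrite qf_eq in H. cbn in H. specialize (H ltac:(intro Z; injection Z; lra)). lra. }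
  assert (Hm : 0 < a*d - b*b).
  { pose proof (Hp (mkV (-b) a 0)) as H. fold (qf J (mkV (-b) a 0)) in H.
    rewrite qf_eq in H. cbn in H.
    specialize (H ltac:(intro Z; injection Z; intros; subst; lra)).
    assert (0 < a * (a*d - b*b)) by lra.
    destruct (Rlt_dec 0 (a*d - b*b)) as [|Hn]; [assumption|].
    assert (a * (a*d - b*b) <= 0) by (apply mul_nonpos; lra). lra. }
  repeat split; try assumption.
  pose proof (Hp (mkV (b*f - c*d) (b*c - a*f) (a*d - b*b))) as H.
  fold (qf J (mkV (b*f - c*d) (b*c - a*f) (a*d - b*b))) in H.
  rewrite qf_eq in H. cbn in H.
  specialize (H ltac:(intro Z; injection Z; intros; lra)).
  assert (0 < (a*d - b*b) * (a*(d*g - f*f) - b*(b*g - f*c) + c*(b*f - d*c))) by lra.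
  destruct (Rlt_dec 0 (a*(d*g - f*f) - b*(b*g - f*c) + c*(b*f - d*c))) as [|Hn]; [assumption|].
  assert ((a*d - b*b) * (a*(d*g - f*f) - b*(b*g - f*c) + c*(b*f - d*c)) <= 0)
    by (apply mul_nonpos; lra). lra.
Qed.

Lemma mu_bound : exists mu, 0 < mu /\ forall x, mu * dot x x <= qf J x.
Proof.
  destruct pd_facts as (Ha & Hd & Hm & HD).
  set (m2 := a*d - b*b) in *. set (D := a*(d*g - f*f) - b*(b*g - f*c) + c*(b*f - d*c)) in *.
  set (s2 := a*d - b*b + a*g - c*c + d*g - f*f). set (t := a + d + g).
  set (mu := Rmin (Rmin 1 (a/2)) (Rmin (m2 / (2*(1 + a + d))) (D / (2*(1 + Rabs s2 + Rabs t))))).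
  assert (Hm1 : mu <= 1) by (unfold mu; repeat (apply Rle_trans with (1:=Rmin_l _ _)); lra).
  assert (Hm2 : mu <= a/2) by (unfold mu; eapply Rle_trans; [apply Rmin_l|apply Rmin_r]).
  assert (Hm3 : mu <= m2 / (2*(1 + a + d))) by (unfold mu; eapply Rle_trans; [apply Rmin_r|apply Rmin_l]).
  assert (Hm4 : mu <= D / (2*(1 + Rabs s2 + Rabs t))) by (unfold mu; eapply Rle_trans; [apply Rmin_r|apply Rmin_r]).
  assert (Hmp : 0 < mu).
  { unfold mu. repeat apply Rmin_glb_lt; try lra; apply Rdiv_lt_0_compat; try lra;
    pose proof (Rabs_pos s2); pose proof (Rabs_pos t); lra. }
  exists mu. split; [exact Hmp|]. intros x.
  assert (A1 : 0 < a - mu) by lra.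
  assert (A2 : 0 < (a - mu)*(d - mu) - b*b).
  { assert (mu * (2*(1 + a + d)) <= m2).
    { apply Rmult_le_reg_r with (/ (2*(1 + a + d))). apply Rinv_0_lt_compat; lra.
      rewrite Rmult_assoc, Rinv_r by lra. unfold Rdiv in Hm3. lra. }
    assert (E2 : (a - mu)*(d - mu) - b*b = m2 - mu*(a+d) + mu*mu) by (unfold m2; ring).
    pose proof (Rle_0_sqr mu). unfold Rsqr in *. lra. }
  assert (A3 : 0 < (a - mu)*((d - mu)*(g - mu) - f*f) - b*(b*(g - mu) - f*c) + c*(b*f - (d - mu)*c)).
  { assert (mu * (2*(1 + Rabs s2 + Rabs t)) <= D).
    { apply Rmult_le_reg_r with (/ (2*(1 + Rabs s2 + Rabs t))).
      apply Rinv_0_lt_compat; pose proof (Rabs_pos s2); pose proof (Rabs_pos t); lra.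
      rewrite Rmult_assoc, Rinv_r by (pose proof (Rabs_pos s2); pose proof (Rabs_pos t); lra).
      unfold Rdiv in Hm4. lra. }
    assert (E : (a - mu)*((d - mu)*(g - mu) - f*f) - b*(b*(g - mu) - f*c) + c*(b*f - (d - mu)*c)
      = D - mu * s2 + mu^2 * t - mu^3) by (unfold D, s2, t; ring).
    rewrite E.
    pose proof (Rle_abs s2); pose proof (Rle_abs (-t)); rewrite Rabs_Ropp in *.
    pose proof (Rabs_pos s2); pose proof (Rabs_pos t).
    assert (mu * s2 <= mu * Rabs s2) by (apply Rmult_le_compat_l; lra).
    assert (mu^2 * (- t) <= mu^2 * Rabs t) by (apply Rmult_le_compat_l; [apply pow2_ge_0|lra]).
    assert (mu^2 * Rabs t <= mu * Rabs t).
    { apply Rmult_le_compat_r; [lra|]. replace (mu^2) with (mu*mu) by ring.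
      replace mu with (mu*1) at 3 by ring. apply Rmult_le_compat_l; lra. }
    assert (mu^3 <= mu).
    { assert (mu*mu <= 1*1) by (apply Rmult_le_compat; lra).
      assert (mu*(mu*mu) <= mu*(1*1)) by (apply Rmult_le_compat_l; lra).
      replace (mu^3) with (mu*(mu*mu)) by ring. lra. }
    lra. }
  pose proof (ldl (a - mu) b c (d - mu) f (g - mu) (v1 x) (v2 x) (v3 x) A1 A2 A3).
  rewrite qf_eq. unfold dot. lra.
Qed.
End JB.

Lemma M_bound (J : mat) x : dot (mvmul J x) (mvmul J x) <=
  (m11 J^2 + m12 J^2 + m13 J^2 + m21 J^2 + m22 J^2 + m23 J^2 + m31 J^2 + m32 J^2 + m33 J^2) * dot x x.
Proof.
  destruct J, x; unfold dot, mvmul; cbn.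
  assert (CS : forall p q r u v w, (p*u + q*v + r*w)^2 <= (p^2 + q^2 + r^2) * (u*u + v*v + w*w)).
  { intros. assert ((p^2 + q^2 + r^2) * (u*u + v*v + w*w) - (p*u + q*v + r*w)^2
      = (q*w - r*v)^2 + (r*u - p*w)^2 + (p*v - q*u)^2) by ring.
    pose proof (pow2_ge_0 (q*w - r*v)); pose proof (pow2_ge_0 (r*u - p*w)); pose proof (pow2_ge_0 (p*v - q*u)).
    lra. }
  pose proof (CS m11 m12 m13 v1 v2 v3); pose proof (CS m21 m22 m23 v1 v2 v3);
  pose proof (CS m31 m32 m33 v1 v2 v3). lra.
Qed.

Lemma G1 Q e : trace (mmul Q (hat e)) = - dot (vee (msub Q (mT Q))) e.
Proof. mring. Qed.
Lemma G2 Q e : vee (msub (mmul Q (hat e)) (mT (mmul Q (hat e)))) =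
  mvmul (msub (mscale (trace Q) mid) (mT Q)) e.
Proof. mring. Qed.
Lemma G3 M x : mmul (mT M) (mmul (hat x) M) = hat (mvmul (mT (cof M)) x).
Proof. mring. Qed.

Lemma PQ Rm Rd : mmul (mT Rm) Rd = mT (mmul (mT Rd) Rm).
Proof. mring. Qed.

Lemma Qdot_E1 Rm Rd W Wd : madd (mmul (mT (mmul Rd (hat Wd))) Rm) (mmul (mT Rd) (mmul Rm (hat W)))
     = msub (mmul (mmul (mT Rd) Rm) (hat W)) (mmul (hat Wd) (mmul (mT Rd) Rm)).
Proof. mring. Qed.
Lemma Qdot_E2 Q W y : mmul Q (hat (vsub W y)) = msub (mmul Q (hat W)) (mmul Q (hat y)).
Proof. mring. Qed.

Lemma vscale_mul a b v : vscale (a * b) v = vscale a (vscale b v).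
Proof. mring. Qed.
Lemma dot_vscale_l k a b : dot (vscale k a) b = k * dot a b.
Proof. mring. Qed.
Lemma dot_vscale2 k a : dot (vscale k a) (vscale k a) = k * k * dot a a.
Proof. mring. Qed.

Lemma Kv1 Q e : vscale (dot (vee (msub Q (mT Q))) e) (vee (msub Q (mT Q))) =
     mvmul (outer (vee (msub Q (mT Q))) (vee (msub Q (mT Q)))) e.
Proof. mring. Qed.
Lemma Kv2 Q e : mvmul (mscale (1 + trace Q) (msub (madd Q (mT Q)) (mscale (trace Q - 1) mid))) e =
  vscale (1 + trace Q) (mvmul (msub (madd Q (mT Q)) (mscale (trace Q - 1) mid)) e).
Proof. mring. Qed.

Lemma XZ Q e : vadd (mvmul (msub (madd Q (mT Q)) (mscale (trace Q - 1) mid)) e)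
    (vscale 2 (mvmul (msub (mscale (trace Q) mid) (mT Q)) e)) =
  vadd (vscale (1 + trace Q) e) (cross (vee (msub Q (mT Q))) e).
Proof. mring. Qed.

Lemma crossnorm q e c : dot (vadd (vscale c e) (cross q e)) (vadd (vscale c e) (cross q e))
  = c * c * dot e e + dot q q * dot e e - dot q e * dot q e.
Proof. mring. Qed.

Lemma dot_nonneg a : 0 <= dot a a.
Proof. destruct a as [x y z]; unfold dot; cbn. pose proof (Rle_0_sqr x); pose proof (Rle_0_sqr y);
  pose proof (Rle_0_sqr z). unfold Rsqr in *. lra. Qed.


Lemma EPl A B W Wd : madd (mmul (mT (mmul A (hat W))) B) (mmul (mT A) (mmul B (hat Wd)))
     = mT (madd (mmul (mT (mmul B (hat Wd))) A) (mmul (mT B) (mmul A (hat W)))).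
Proof. mring. Qed.

Lemma Qdot Rm Rd W Wd : SO3 Rm -> SO3 Rd ->
  madd (mmul (mT (mmul Rd (hat Wd))) Rm) (mmul (mT Rd) (mmul Rm (hat W))) =
  mmul (mmul (mT Rd) Rm) (hat (eW Rm W Rd Wd)).
Proof.
  intros HRm HRd. pose proof (so3_rel Rd Rm HRd HRm) as HQ.
  unfold eW. rewrite (PQ Rm Rd). set (Q := mmul (mT Rd) Rm).
  pose proof (Qdot_E1 Rm Rd W Wd) as E1. fold Q in E1.
  pose proof (Qdot_E2 Q W (mvmul (mT Q) Wd)) as E2.
  assert (E3 : mmul Q (hat (mvmul (mT Q) Wd)) = mmul (hat Wd) Q).
  { pose proof (G3 Q Wd) as G. rewrite (so3_cof Q HQ) in G. rewrite <- G.
    rewrite mmul_assoc, (so3_QQT Q HQ), mmul_id_l. reflexivity. }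
  rewrite E1, E2, E3. reflexivity.
Qed.

Lemma so3_Kvec Q e : SO3 Q ->
  vscale (dot (vee (msub Q (mT Q))) e) (vee (msub Q (mT Q))) =
  vscale (1 + trace Q) (mvmul (msub (madd Q (mT Q)) (mscale (trace Q - 1) mid)) e).
Proof.
  intros H. pose proof (so3_K Q H) as K.
  rewrite Kv1, K. apply Kv2.
Qed.

Lemma eRdot_bound Q e : SO3 Q -> 0 < 1 + trace Q ->
  let c := trace Q in let s := sqrt (1 + c) in
  let q := vee (msub Q (mT Q)) in
  let cd := - dot q e in
  let qd := mvmul (msub (mscale c mid) (mT Q)) e in
  let sd := / (2 * s) * cd in
  let invd := - (2 * sd) / ((2 * s) * (2 * s)) in
  let D := vadd (vscale invd q) (vscale (/ (2 * s)) qd) in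
  dot D D <= / 4 * dot e e.
Proof.
  intros HQ Hc c s q cd qd sd invd D.
  assert (Hs : 0 < s) by (apply sqrt_lt_R0; exact Hc).
  assert (Hss : s * s = 1 + c) by (apply sqrt_sqrt; unfold c; lra).
  assert (ED : D = vscale (/ (4 * s)) (vadd (mvmul (msub (madd Q (mT Q)) (mscale (trace Q - 1) mid)) e) (vscale 2 qd))).
  { assert (Einv : invd = / (4 * s * s * s) * dot q e).
    { unfold invd, sd, cd. field. lra. }
    unfold D. rewrite Einv, vscale_mul. unfold q. rewrite (so3_Kvec Q e HQ). fold q.
    generalize (mvmul (msub (madd Q (mT Q)) (mscale (trace Q - 1) mid)) e). intros X.
    fold c. rewrite <- Hss. clearbody qd s.
    destruct X as [x1 x2 x3], qd as [y1 y2 y3].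
    apply vec_eq; unfold vscale, vadd; cbn; field; lra. }
  unfold qd, c in ED. rewrite (XZ Q e) in ED. fold c q in ED.
  rewrite ED, dot_vscale2, crossnorm.
  pose proof (so3_qq Q HQ) as Hqq. fold c q in Hqq. rewrite Hqq.
  assert (0 <= dot q e * dot q e) by (pose proof (Rle_0_sqr (dot q e)); unfold Rsqr in *; lra).
  pose proof (dot_nonneg e).
  assert (E : (1 + c) * (1 + c) * dot e e + (1 + c) * (3 - c) * dot e e = 4 * (s * s) * dot e e)
    by (rewrite Hss; ring).
  assert (/ (4 * s) * / (4 * s) * (4 * (s * s) * dot e e) = / 4 * dot e e) by (field; lra).
  assert (0 < / (4 * s) * / (4 * s)).
  { apply Rmult_lt_0_compat; apply Rinv_0_lt_compat; lra. }
  assert (/ (4 * s) * / (4 * s) * ((1 + c) * (1 + c) * dot e e + (1 + c) * (3 - c) * dot e e - dot q e * dot q e)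
     <= / (4 * s) * / (4 * s) * (4 * (s * s) * dot e e)).
  { apply Rmult_le_compat_l; lra. }
  lra.
Qed.

Lemma eR_Psi Q : SO3 Q -> 0 < 1 + trace Q ->
  let s := sqrt (1 + trace Q) in
  let q := vee (msub Q (mT Q)) in
  let eRv := vscale (/ (2 * s)) q in
  0 < s <= 2 /\ (2 - s) / 2 <= dot eRv eRv <= 2 - s.
Proof.
  intros HQ Hc s q eRv.
  assert (Hs : 0 < s) by (apply sqrt_lt_R0; exact Hc).
  assert (Hss : s * s = 1 + trace Q) by (apply sqrt_sqrt; lra).
  pose proof (so3_qq Q HQ) as Hq. fold q in Hq.
  pose proof (dot_nonneg q).
  assert (Hc3 : trace Q <= 3).
  { destruct (Rle_dec (trace Q) 3) as [|Hn]; [assumption|].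
    assert ((1 + trace Q) * (3 - trace Q) < 0) by (apply Rmult_pos_neg; lra). lra. }
  assert (Hs2 : s <= 2).
  { destruct (Rle_dec s 2) as [|Hn]; [assumption|]. nra. }
  unfold eRv. rewrite dot_vscale2, Hq, <- Hss.
  assert (E : / (2 * s) * / (2 * s) * (s * s * (3 - (s * s - 1))) = (2 - s) * (2 + s) / 4)
    by (field; lra).
  replace (trace Q) with (s * s - 1) by lra. rewrite E.
  split; [lra|]. split.
  - apply Rmult_le_reg_r with 4; [lra|]. unfold Rdiv. rewrite !Rmult_assoc, Rinv_l by lra. nra.
  - apply Rmult_le_reg_r with 4; [lra|]. unfold Rdiv. rewrite !Rmult_assoc, Rinv_l by lra. nra.
Qed.

Lemma eR_deriv (Rm Rd : R -> mat) (W Wd : R -> vec) t :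
  SO3 (Rm t) -> SO3 (Rd t) -> 0 < 1 + trace (mmul (mT (Rd t)) (Rm t)) ->
  mat_deriv_at Rm t (mmul (Rm t) (hat (W t))) ->
  mat_deriv_at Rd t (mmul (Rd t) (hat (Wd t))) ->
  (exists D, vec_deriv_at (fun s => eR (Rm s) (Rd s)) t D /\
     dot D D <= / 4 * dot (eW (Rm t) (W t) (Rd t) (Wd t)) (eW (Rm t) (W t) (Rd t) (Wd t))) /\
  derivable_pt_lim (fun s => Psi (Rm s) (Rd s)) t
     (dot (eR (Rm t) (Rd t)) (eW (Rm t) (W t) (Rd t) (Wd t))).
Proof.
  intros HRm HRd Hc dRm dRd.
  pose proof (so3_rel _ _ HRd HRm) as HQ.
  set (Q := mmul (mT (Rd t)) (Rm t)) in *.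
  set (e := eW (Rm t) (W t) (Rd t) (Wd t)).
  pose proof (Qdot (Rm t) (Rd t) (W t) (Wd t) HRm HRd) as EQd. fold Q e in EQd.
  pose proof (md_mmul _ _ _ _ t (md_mT _ _ t dRd) dRm) as dQ. cbv beta in dQ.
  rewrite EQd in dQ.
  pose proof (md_mmul _ _ _ _ t (md_mT _ _ t dRm) dRd) as dP. cbv beta in dP.
  rewrite EPl, EQd in dP.
  pose proof (sd_trace _ _ t dQ) as dc. rewrite G1 in dc.
  set (s := sqrt (1 + trace Q)).
  assert (Hs : 0 < s) by (apply sqrt_lt_R0; exact Hc).
  assert (ds : derivable_pt_lim (fun u => sqrt (1 + trace (mmul (mT (Rd u)) (Rm u)))) t
     (/ (2 * s) * (- dot (vee (msub Q (mT Q))) e))).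
  { eapply D_ext. apply D_sqrt; [ | exact Hc]. apply D_plus. apply D_const. exact dc.
    cbv beta. fold Q s. ring. }
  split.
  - assert (dinv : derivable_pt_lim (fun u => / (2 * sqrt (1 + trace (mmul (mT (Rd u)) (Rm u))))) t
      (- (2 * (/ (2 * s) * (- dot (vee (msub Q (mT Q))) e))) / ((2 * s) * (2 * s)))).
    { apply (D_inv (fun u => 2 * sqrt (1 + trace (mmul (mT (Rd u)) (Rm u))))).
      apply D_cmult. exact ds. fold Q s. lra. }
    pose proof (vd_vee _ _ t (md_msub _ _ _ _ t dQ dP)) as dq. cbv beta in dq.
    rewrite G2 in dq.
    pose proof (vd_vscale _ _ _ _ t dinv dq) as dR. cbv beta in dR.
    eexists. split.
    + unfold eR. exact dR.
    + rewrite (PQ (Rm t) (Rd t)). fold Q s. pose proof (eRdot_bound Q e HQ Hc) as B. cbv zeta in B. fold s in B.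
      exact B.
  - unfold Psi. eapply D_ext. apply D_minus. apply D_const. exact ds.
    unfold eR. rewrite (PQ (Rm t) (Rd t)). fold Q s. rewrite dot_vscale_l. ring.
Qed.

Definition zmat := mkM 0 0 0 0 0 0 0 0 0.

Lemma sd_det A dA t : mat_deriv_at A t dA ->
  derivable_pt_lim (fun s => det (A s)) t (trace (mmul (mT (cof (A t))) dA)).
Proof.
  intros (a1&a2&a3&a4&a5&a6&a7&a8&a9). unfold det.
  eapply D_ext; [ dsolve | ].
  cbv beta. remember (A t) as M eqn:HM. clear HM. destruct M as [x1 x2 x3 x4 x5 x6 x7 x8 x9], dA as [y1 y2 y3 y4 y5 y6 y7 y8 y9].
  cbv beta iota delta [vee hat mvmul mmul msub mT mscale madd cof mid trace det m11 m12 m13 m21 m22 m23 m31 m32 m33].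
  ring.
Qed.

Lemma det_rot_zero A w : trace (mmul (mT (cof A)) (mmul A (hat w))) = 0.
Proof. mring. Qed.

Lemma AAT_zero A w : madd (mmul (mmul A (hat w)) (mT A)) (mmul A (mT (mmul A (hat w)))) = zmat.
Proof. unfold zmat. mring. Qed.

Lemma const0 f : (forall u, 0 < u -> derivable_pt_lim f u 0) -> rcont0 f ->
  forall t, 0 <= t -> f t = f 0.
Proof.
  intros Hd Hc t Ht.
  assert (f t <= f 0).
  { apply nonincr0; auto. intros u Hu. exists 0. split; [apply Hd; lra | lra]. }
  assert (- f t <= - f 0).
  { apply (nonincr0 (fun s => - f s)); auto. apply rc0_opp; exact Hc.
    intros u Hu. exists (-0). split; [apply D_opp; apply Hd; lra | lra]. }
  lra.
Qed.

Lemma rot_inv (Rm : R -> mat) (W : R -> vec) : SO3 (Rm 0) -> mat_rcont0 Rm ->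
  (forall t, 0 < t -> mat_deriv_at Rm t (mmul (Rm t) (hat (W t)))) ->
  forall t, 0 <= t -> SO3 (Rm t).
Proof.
  intros H0 Hc Hd t Ht.
  assert (EM : mmul (Rm t) (mT (Rm t)) = mid).
  { rewrite <- (so3_QQT _ H0).
    pose proof (mr_mmul _ _ Hc (mr_mT _ Hc)) as Hr.
    assert (HD : forall u, 0 < u -> mat_deriv_at (fun s => mmul (Rm s) (mT (Rm s))) u zmat).
    { intros u Hu. pose proof (md_mmul _ _ _ _ u (Hd u Hu) (md_mT _ _ u (Hd u Hu))) as X.
      rewrite AAT_zero in X. exact X. }
    destruct Hr as (r1&r2&r3&r4&r5&r6&r7&r8&r9).
    apply mat_eq;
    match goal with |- ?p _ = ?p _ =>
      apply (const0 (fun s => p (mmul (Rm s) (mT (Rm s))))); [ | assumption | exact Ht] end;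
    intros u Hu; destruct (HD u Hu) as (d1&d2&d3&d4&d5&d6&d7&d8&d9); assumption. }
  assert (ED : det (Rm t) = 1).
  { destruct H0 as [_ H0]. rewrite <- H0.
    apply (const0 (fun s => det (Rm s))); [ | | exact Ht].
    - intros u Hu. pose proof (sd_det _ _ u (Hd u Hu)) as X. rewrite det_rot_zero in X. exact X.
    - destruct Hc as (r1&r2&r3&r4&r5&r6&r7&r8&r9). unfold det. rcsolve. }
  assert (HT : SO3 (mT (Rm t))).
  { split. rewrite mT_mT. exact EM. rewrite det_mT. exact ED. }
  pose proof (so3_QQT _ HT) as X. rewrite mT_mT in X. split; assumption.
Qed.

Lemma La A B w u : mvmul (madd (mmul (mT (mmul A (hat w))) B) (mmul (mT A) (mmul B (hat u)))) u
  = vopp (cross w (mvmul (mmul (mT A) B) u)).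
Proof. mring. Qed.
Lemma hat_cross w y : mvmul (hat w) y = cross w y.
Proof. mring. Qed.

Lemma Lb (J : mat) kR kW dWv W y z E e :
  vadd (mvmul J dWv) (cross W (mvmul J W)) =
  vsub (vadd (vadd (vscale (-kR) E) (vscale (-kW) e)) (cross W (mvmul J W))) (mvmul J (vsub (cross W y) z)) ->
  mvmul J (vsub dWv (vadd (vopp (cross W y)) z)) = vadd (vscale (-kR) E) (vscale (-kW) e).
Proof.
  intros H. pose proof (f_equal v1 H); pose proof (f_equal v2 H); pose proof (f_equal v3 H).

  cbv beta iota delta [vee hat mvmul mmul msub mT mscale madd cof mid trace det cross dot vadd vopp vsub vscale v1 v2 v3] in *.
  apply vec_eq; cbv beta iota delta [v1 v2 v3]; lra.
Qed.

Lemma e_deriv (J : mat) kR kW (Rm Rd : R -> mat) (W Wd : R -> vec) dWv dWdv t :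
  mat_deriv_at Rm t (mmul (Rm t) (hat (W t))) ->
  mat_deriv_at Rd t (mmul (Rd t) (hat (Wd t))) ->
  vec_deriv_at W t dWv -> vec_deriv_at Wd t dWdv ->
  vadd (mvmul J dWv) (cross (W t) (mvmul J (W t))) = control J kR kW (Rm t) (W t) (Rd t) (Wd t) dWdv ->
  exists de, vec_deriv_at (fun s => eW (Rm s) (W s) (Rd s) (Wd s)) t de /\
    mvmul J de = vadd (vscale (-kR) (eR (Rm t) (Rd t))) (vscale (-kW) (eW (Rm t) (W t) (Rd t) (Wd t))).
Proof.
  intros dRm dRd dW dWd Hdyn.
  pose proof (vd_vsub _ _ _ _ t dW (vd_mvmul _ _ _ _ t (md_mmul _ _ _ _ t (md_mT _ _ t dRm) dRd) dWd)) as X.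
  cbv beta in X. rewrite La in X.
  eexists. split. unfold eW. exact X.
  apply Lb. unfold control in Hdyn. rewrite hat_cross in Hdyn. exact Hdyn.
Qed.

Lemma vnorm2 x : vnorm x ^ 2 = dot x x.
Proof. unfold vnorm. rewrite <- Rsqr_pow2. apply Rsqr_sqrt. apply dot_nonneg. Qed.

Lemma dot_symJ (J : mat) a b : symmetric J -> dot a (mvmul J b) = dot (mvmul J a) b.
Proof.
  intros Hs. destruct J as [j11 j12 j13 j21 j22 j23 j31 j32 j33].
  unfold symmetric, mT in Hs. cbv beta iota delta [m11 m12 m13 m21 m22 m23 m31 m32 m33] in Hs.
  injection Hs; intros; subst. mring.
Qed.

Lemma young a b : 2 * dot a b <= dot a a + dot b b.
Proof.
  pose proof (dot_nonneg (vsub a b)).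
  assert (E : dot (vsub a b) (vsub a b) = dot a a + dot b b - 2 * dot a b) by mring. lra.
Qed.
Lemma young' a b : - (2 * dot a b) <= dot a a + dot b b.
Proof.
  pose proof (dot_nonneg (vadd a b)).
  assert (E : dot (vadd a b) (vadd a b) = dot a a + dot b b + 2 * dot a b) by mring. lra.
Qed.
Lemma young2 kR kW a b : 0 < kR -> 2 * kR * (- kW * dot a b) <= kR * kR * dot a a + kW * kW * dot b b.
Proof.
  intros H. pose proof (dot_nonneg (vadd (vscale kR a) (vscale kW b))).
  assert (E : dot (vadd (vscale kR a) (vscale kW b)) (vadd (vscale kR a) (vscale kW b))
    = kR * kR * dot a a + kW * kW * dot b b + 2 * kR * kW * dot a b) by mring. lra.
Qed.

Lemma dot_comm a b : dot a b = dot b a.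
Proof. mring. Qed.

Lemma V1alg kR kW b E e : b = vadd (vscale (-kR) E) (vscale (-kW) e) ->
  / 2 * (dot b e + dot e b) + kR * dot E e = - kW * dot e e.
Proof.
  intros ->. rewrite (dot_comm e (vadd _ _)).
  assert (H : dot (vadd (vscale (-kR) E) (vscale (-kW) e)) e = -kR * dot E e - kW * dot e e) by mring.
  rewrite H. field.
Qed.
Lemma V2alg kR kW E e : dot E (vadd (vscale (-kR) E) (vscale (-kW) e)) = - kR * dot E E - kW * dot E e.
Proof. mring. Qed.

Section Traj.
Variables (J : mat) (kR kW lmax mu M eps beta : R).
Hypotheses (Hs : symmetric J) (HkR : 0 < kR) (HkW : 0 < kW) (Hlm : 0 < lmax) (Hmu : 0 < mu)
  (Hmub : forall x, mu * dot x x <= qf J x) (Hlmb : forall x, qf J x <= lmax * dot x x)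
  (HMb : forall x, dot (mvmul J x) (mvmul J x) <= M * dot x x) (HM : 0 <= M)
  (He1 : 0 < eps) (He2 : eps <= kR) (He3 : eps * M <= mu / 2)
  (He4 : eps * ((/4 + M) + kW * kW / kR) <= kW)
  (Hb1 : 0 < beta) (Hb2 : beta * (lmax / 2 + mu / 4) <= kW / 2) (Hb3 : beta * 5 <= eps).
Variables (Rd : R -> mat) (Wd dWd : R -> vec) (Rm : R -> mat) (W : R -> vec).
Hypotheses (Hatt : attitude_command Rd Wd dWd)
  (Hcl : closed_loop_solution J kR kW Rd Wd dWd Rm W).

Definition gf s := 1 + trace (mmul (mT (Rd s)) (Rm s)).
Definition ef s := eW (Rm s) (W s) (Rd s) (Wd s).
Definition eRf s := eR (Rm s) (Rd s).
Definition V1 s := / 2 * qf J (ef s) + kR * Psi (Rm s) (Rd s).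
Definition V2 s := V1 s + eps * dot (eRf s) (mvmul J (ef s)).

Lemma rotRm t : 0 <= t -> SO3 (Rm t).
Proof. destruct Hcl as (H0 & Hc & _ & Hd & _). intros; eapply rot_inv; eauto. Qed.
Lemma rotRd t : SO3 (Rd t).
Proof. destruct Hatt as (H & _). apply H. Qed.

Lemma Rd_rc : mat_rcont0 Rd.
Proof. destruct Hatt as (_ & H & _). apply mr_of_deriv. intros t; eexists; apply H. Qed.
Lemma Wd_rc : vec_rcont0 Wd.
Proof. destruct Hatt as (_ & _ & H & _). apply vr_of_deriv. intros t; eexists; apply H. Qed.
Lemma Rm_rc : mat_rcont0 Rm.
Proof. destruct Hcl as (_ & H & _). exact H. Qed.
Lemma W_rc : vec_rcont0 W.
Proof. destruct Hcl as (_ & _ & H & _). exact H. Qed.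

Lemma Q_rc : mat_rcont0 (fun s => mmul (mT (Rd s)) (Rm s)).
Proof. apply mr_mmul. apply mr_mT, Rd_rc. apply Rm_rc. Qed.
Lemma g_rc : rcont0 gf.
Proof. unfold gf. apply rc0_plus. apply rc0_const. apply sr_trace, Q_rc. Qed.
Lemma e_rc : vec_rcont0 ef.
Proof. unfold ef, eW. apply vr_vsub. apply W_rc. apply vr_mvmul. apply mr_mmul.
  apply mr_mT, Rm_rc. apply Rd_rc. apply Wd_rc. Qed.
Lemma Psi_rc : 0 < gf 0 -> rcont0 (fun s => Psi (Rm s) (Rd s)).
Proof. intros H. unfold Psi. apply rc0_minus. apply rc0_const. apply rc0_sqrt. exact g_rc. exact H. Qed.
Lemma eR_rc : 0 < gf 0 -> vec_rcont0 eRf.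
Proof.
  intros H. unfold eRf, eR. apply vr_vscale.
  - apply rc0_inv. apply (rc0_mult (fun _ => 2)). apply rc0_const. apply rc0_sqrt. exact g_rc. exact H.
    cbv beta. assert (0 < sqrt (gf 0)) by (apply sqrt_lt_R0; exact H). unfold gf in H0. lra.
  - apply vr_vee. apply mr_msub. apply Q_rc. apply mr_mmul. apply mr_mT, Rm_rc. apply Rd_rc.
Qed.
Lemma V1_rc : 0 < gf 0 -> rcont0 V1.
Proof. intros H. unfold V1, qf. apply rc0_plus. apply (rc0_mult (fun _ => /2)). apply rc0_const.
  apply sr_dot. apply e_rc. apply vr_cmvmul, e_rc. apply (rc0_mult (fun _ => kR)). apply rc0_const.
  apply Psi_rc, H. Qed.
Lemma V2_rc : 0 < gf 0 -> rcont0 V2.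
Proof. intros H. unfold V2. apply rc0_plus. apply V1_rc, H. apply (rc0_mult (fun _ => eps)). apply rc0_const.
  apply sr_dot. apply eR_rc, H. apply vr_cmvmul, e_rc. Qed.

Lemma g_cont t : 0 < t -> continuity_pt gf t.
Proof.
  intros Ht. destruct Hcl as (_ & _ & _ & Hd & _). destruct Hatt as (_ & HdRd & _).
  pose proof (sd_trace _ _ t (md_mmul _ _ _ _ t (md_mT _ _ t (HdRd t)) (Hd t Ht))) as X.
  eapply cont_of_deriv. unfold gf. apply D_plus. apply D_const. exact X.
Qed.

Lemma derivs t : 0 < t -> 0 < gf t ->
  exists de dR,
    vec_deriv_at ef t de /\ mvmul J de = vadd (vscale (-kR) (eRf t)) (vscale (-kW) (ef t)) /\
    vec_deriv_at eRf t dR /\ dot dR dR <= / 4 * dot (ef t) (ef t) /\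
    derivable_pt_lim (fun s => Psi (Rm s) (Rd s)) t (dot (eRf t) (ef t)).
Proof.
  intros Ht Hg.
  destruct Hcl as (_ & _ & _ & Hd & Hdyn). destruct Hatt as (_ & HdRd & HdWd & _).
  destruct (Hdyn t Ht) as [dW [HdW Hdy]].
  destruct (e_deriv J kR kW Rm Rd W Wd dW (dWd t) t (Hd t Ht) (HdRd t) HdW (HdWd t) Hdy) as [de [Hde HJ]].
  destruct (eR_deriv Rm Rd W Wd t (rotRm t ltac:(lra)) (rotRd t) Hg (Hd t Ht) (HdRd t)) as [[dR [HdR Hb]] HP].
  exists de, dR. split; [exact Hde|]. split; [exact HJ|]. split; [exact HdR|]. split; [exact Hb|]. exact HP.
Qed.

Lemma V1_deriv t : 0 < t -> 0 < gf t -> derivable_pt_lim V1 t (- kW * dot (ef t) (ef t)).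
Proof.
  intros Ht Hg. destruct (derivs t Ht Hg) as (de & dR & Hde & HJ & HdR & Hb & HP).
  unfold V1, qf. eapply D_ext.
  - apply D_plus. apply D_cmult. apply sd_dot. exact Hde. apply vd_cmvmul. exact Hde.
    apply D_cmult. exact HP.
  - cbv beta. rewrite (dot_symJ J de (ef t) Hs). rewrite Rmult_plus_distr_l.
    rewrite <- (V1alg kR kW (mvmul J de) (eRf t) (ef t) HJ). ring.
Qed.

Lemma V2_deriv t : 0 < t -> 0 < gf t -> exists d, derivable_pt_lim V2 t d /\ d + beta * V2 t <= 0.
Proof.
  intros Ht Hg. destruct (derivs t Ht Hg) as (de & dR & Hde & HJ & HdR & Hb & HP).
  eexists. split.
  - unfold V2. apply D_plus. apply V1_deriv; assumption.
    apply D_cmult. apply sd_dot. exact HdR. apply vd_cmvmul. exact Hde.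
  - rewrite HJ, V2alg.
    set (e := ef t) in *. set (E := dot e e) in *. set (Ev := eRf t) in *. set (A := dot Ev Ev) in *.
    set (Je := mvmul J e) in *.
    pose proof (rotRm t ltac:(lra)) as HRm.
    pose proof (so3_rel _ _ (rotRd t) HRm) as HQ.
    pose proof (eR_Psi _ HQ Hg) as HPs. cbv zeta in HPs.
    assert (EA : A = dot (vscale (/ (2 * sqrt (1 + trace (mmul (mT (Rd t)) (Rm t)))))
                   (vee (msub (mmul (mT (Rd t)) (Rm t)) (mT (mmul (mT (Rd t)) (Rm t))))))
                 (vscale (/ (2 * sqrt (1 + trace (mmul (mT (Rd t)) (Rm t)))))
                   (vee (msub (mmul (mT (Rd t)) (Rm t)) (mT (mmul (mT (Rd t)) (Rm t))))))).
    { unfold A, Ev, eRf, eR. rewrite (PQ (Rm t) (Rd t)). reflexivity. }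
    rewrite <- EA in HPs.
    assert (EPs : Psi (Rm t) (Rd t) = 2 - sqrt (1 + trace (mmul (mT (Rd t)) (Rm t)))) by reflexivity.
    unfold V2, V1. fold e. fold Ev. rewrite EPs.
    set (Ps := 2 - sqrt (1 + trace (mmul (mT (Rd t)) (Rm t)))) in *.
    destruct HPs as [_ [HPs1 HPs2]].
    assert (HE : 0 <= E) by apply dot_nonneg.
    assert (HA : 0 <= A) by apply dot_nonneg.
    pose proof (HMb e) as HJe. fold Je in HJe.
    pose proof (Hlmb e) as Hq.
    pose proof (young dR Je) as Y1.
    pose proof (young2 kR kW Ev e HkR) as Y2. fold E A in Y2.
    pose proof (young Ev Je) as Y3. fold A in Y3. fold E in HJe. fold E in Hq.
    set (K := kW * kW / kR).
    assert (HK : kR * K = kW * kW) by (unfold K; field; lra).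
    assert (HK0 : 0 <= K) by (unfold K; apply Rmult_le_pos; [nra | apply Rlt_le, Rinv_0_lt_compat; lra]).
    set (DJ := dot dR Je). set (eRe := dot Ev e). set (eRJe := dot Ev Je).
    fold DJ in Y1. fold eRe in Y2. fold eRJe in Y3.
    assert (h1 : eps * DJ <= eps * (E / 8 + M * E / 2)).
    { apply Rmult_le_compat_l; lra. }
    assert (h2 : eps * (- kW * eRe) <= eps * (kR / 2 * A + K / 2 * E)).
    { apply Rmult_le_compat_l; [lra|].
      apply Rmult_le_reg_l with (2 * kR); [lra|].
      replace (2 * kR * (kR / 2 * A + K / 2 * E)) with (kR * kR * A + (kR * K) * E) by (field; lra).
      rewrite HK. lra. }
    assert (h3 : beta * (/ 2 * qf J e) <= beta * (lmax / 2 * E)).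
    { apply Rmult_le_compat_l; lra. }
    assert (h4 : beta * (kR * Ps) <= beta * (2 * kR * A)).
    { apply Rmult_le_compat_l; [lra|]. nra. }
    assert (h5 : beta * (eps * eRJe) <= beta * (eps * (A / 2 + M * E / 2))).
    { apply Rmult_le_compat_l; [lra|]. apply Rmult_le_compat_l; lra. }
    assert (c1 : 0 <= (kW / 2 - eps * (/8 + M / 2 + K / 2)) * E).
    { apply Rmult_le_pos; [|lra]. unfold K in *. lra. }
    assert (c2 : 0 <= (kW / 2 - beta * (lmax / 2 + mu / 4)) * E).
    { apply Rmult_le_pos; lra. }
    assert (c3 : 0 <= beta * (mu / 4 - eps * M / 2) * E).
    { apply Rmult_le_pos; [apply Rmult_le_pos; lra | lra]. }
    assert (c4 : 0 <= (eps * kR / 2 - beta * (2 * kR + eps / 2)) * A).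
    { apply Rmult_le_pos; [|lra].
      assert (beta * (2 * kR + eps / 2) <= beta * (5 * kR / 2)) by (apply Rmult_le_compat_l; lra).
      assert (beta * (5 * kR / 2) <= eps / 5 * (5 * kR / 2)) by (apply Rmult_le_compat_r; lra).
      lra. }
    fold Je. fold eRJe.
    lra.
Qed.


Lemma Ps_bounds t : 0 <= t -> 0 < gf t ->
  Psi (Rm t) (Rd t) / 2 <= dot (eRf t) (eRf t) <= Psi (Rm t) (Rd t).
Proof.
  intros Ht Hg.
  pose proof (so3_rel _ _ (rotRd t) (rotRm t Ht)) as HQ.
  pose proof (eR_Psi _ HQ Hg) as HPs. cbv zeta in HPs.
  unfold eRf, eR, Psi. rewrite (PQ (Rm t) (Rd t)). destruct HPs as [_ H]. exact H.
Qed.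

Lemma V2_lower t : 0 <= t -> 0 < gf t ->
  Rmin (mu / 4) (kR / 2) * (dot (eRf t) (eRf t) + dot (ef t) (ef t)) <= V2 t.
Proof.
  intros Ht Hg. pose proof (Ps_bounds t Ht Hg) as [P1 P2].
  unfold V2, V1.
  set (e := ef t) in *. set (Ev := eRf t) in *. set (Je := mvmul J e).
  set (E := dot e e) in *. set (A := dot Ev Ev) in *.
  set (Ps := Psi (Rm t) (Rd t)) in *.
  assert (HE : 0 <= E) by apply dot_nonneg.
  assert (HA : 0 <= A) by apply dot_nonneg.
  pose proof (Hmub e) as Hq. fold E in Hq.
  pose proof (HMb e) as HJe. fold Je E in HJe.
  pose proof (young' Ev Je) as Y. fold A in Y.
  set (eRJe := dot Ev Je) in *.
  assert (h1 : eps * (- (2 * eRJe)) <= eps * (A + M * E)) by (apply Rmult_le_compat_l; lra).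
  assert (h2 : eps * M * E <= mu / 2 * E) by (apply Rmult_le_compat_r; lra).
  assert (h3 : eps * A <= kR * A) by (apply Rmult_le_compat_r; lra).
  assert (h4 : Rmin (mu / 4) (kR / 2) * A <= kR / 2 * A) by (apply Rmult_le_compat_r; [lra | apply Rmin_r]).
  assert (h5 : Rmin (mu / 4) (kR / 2) * E <= mu / 4 * E) by (apply Rmult_le_compat_r; [lra | apply Rmin_l]).
  assert (h6 : kR * (Ps / 2) <= kR * A) by (apply Rmult_le_compat_l; lra).
  assert (h7 : kR * A <= kR * Ps) by (apply Rmult_le_compat_l; lra).
  unfold qf in Hq. fold Je in Hq. unfold qf. fold Je. fold eRJe.
  lra.
Qed.

Lemma V2_upper : 0 < gf 0 ->
  V2 0 <= (lmax / 2 + mu / 4 + 5 * kR / 2) * (dot (eRf 0) (eRf 0) + dot (ef 0) (ef 0)).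
Proof.
  intros Hg. pose proof (Ps_bounds 0 (Rle_refl 0) Hg) as [P1 P2].
  unfold V2, V1.
  set (e := ef 0) in *. set (Ev := eRf 0) in *. set (Je := mvmul J e).
  set (E := dot e e) in *. set (A := dot Ev Ev) in *.
  set (Ps := Psi (Rm 0) (Rd 0)) in *.
  assert (HE : 0 <= E) by apply dot_nonneg.
  assert (HA : 0 <= A) by apply dot_nonneg.
  pose proof (Hlmb e) as Hq. fold E in Hq.
  pose proof (HMb e) as HJe. fold Je E in HJe.
  pose proof (young Ev Je) as Y. fold A in Y.
  set (eRJe := dot Ev Je) in *.
  assert (h1 : eps * (2 * eRJe) <= eps * (A + M * E)) by (apply Rmult_le_compat_l; lra).
  assert (h2 : eps * M * E <= mu / 2 * E) by (apply Rmult_le_compat_r; lra).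
  assert (h3 : eps * A <= kR * A) by (apply Rmult_le_compat_r; lra).
  assert (h6 : kR * (Ps / 2) <= kR * A) by (apply Rmult_le_compat_l; lra).
  assert (h8 : 0 <= mu / 4 * A) by (apply Rmult_le_pos; lra).
  assert (h9 : 0 <= lmax / 2 * A) by (apply Rmult_le_pos; lra).
  assert (h10 : 0 <= kR * E) by (apply Rmult_le_pos; lra).
  unfold qf in Hq. fold Je in Hq. unfold qf. fold Je. fold eRJe.
  lra.
Qed.

Lemma g_pos : 0 < gf 0 -> V1 0 < 2 * kR -> forall t, 0 <= t -> 0 < gf t.
Proof.
  intros Hg0 HV.
  set (del := 2 - V1 0 / kR).
  assert (Hdel : 0 < del).
  { unfold del. assert (V1 0 / kR < 2).
    { apply Rmult_lt_reg_r with kR; [lra|]. unfold Rdiv. rewrite Rmult_assoc, Rinv_l by lra. lra. }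
    lra. }
  apply (barrier gf (del * del) g_rc g_cont Hg0 ltac:(nra)).
  intros t Ht Hpos.
  assert (HV1 : V1 t <= V1 0).
  { apply nonincr0; [lra | apply V1_rc, Hg0 |].
    intros u Hu. exists (- kW * dot (ef u) (ef u)). split.
    - apply V1_deriv; [lra | apply Hpos; lra].
    - pose proof (dot_nonneg (ef u)). nra. }
  assert (Hq : 0 <= qf J (ef t)).
  { pose proof (Hmub (ef t)). pose proof (dot_nonneg (ef t)). nra. }
  assert (HgT : 0 < gf t) by (apply Hpos; lra).
  assert (Hsq : del <= sqrt (gf t)).
  { assert (E1 : V1 t = / 2 * qf J (ef t) + kR * (2 - sqrt (gf t))) by reflexivity.
    assert (kR * (2 - sqrt (gf t)) <= V1 0) by lra.
    unfold del. assert (2 - sqrt (gf t) <= V1 0 / kR).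
    { apply Rmult_le_reg_r with kR; [lra|]. unfold Rdiv. rewrite Rmult_assoc, Rinv_l by lra. lra. }
    lra. }
  rewrite <- (sqrt_sqrt (gf t)) by lra.
  apply Rmult_le_compat; lra.
Qed.

Lemma expo : 0 < gf 0 -> V1 0 < 2 * kR -> forall t, 0 <= t ->
  dot (eRf t) (eRf t) + dot (ef t) (ef t) <=
  (lmax / 2 + mu / 4 + 5 * kR / 2) / Rmin (mu / 4) (kR / 2) *
  (dot (eRf 0) (eRf 0) + dot (ef 0) (ef 0)) * exp (- beta * t).
Proof.
  intros Hg0 HV t Ht.
  pose proof (g_pos Hg0 HV) as Hg.
  set (F := fun s => V2 s * exp (beta * s)).
  assert (HF : F t <= F 0).
  { apply nonincr0; [exact Ht | |].
    - unfold F. apply rc0_mult. apply V2_rc, Hg0.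
      apply rc0_of_cont. apply (cont_of_deriv _ _ (exp (beta * 0) * (beta * 1))).
      apply (D_exp (fun s => beta * s)). apply D_cmult. apply D_id.
    - intros u Hu. destruct (V2_deriv u ltac:(lra) (Hg u ltac:(lra))) as [d [Hd Hdb]].
      exists (d * exp (beta * u) + V2 u * (exp (beta * u) * (beta * 1))). split.
      + unfold F. eapply D_ext. apply D_mult. exact Hd.
        apply (D_exp (fun s => beta * s)). apply D_cmult. apply D_id. cbv beta. ring.
      + pose proof (exp_pos (beta * u)).
        assert (E : d * exp (beta * u) + V2 u * (exp (beta * u) * (beta * 1)) = exp (beta * u) * (d + beta * V2 u)) by ring.
        rewrite E. assert (exp (beta * u) * (d + beta * V2 u) <= exp (beta * u) * 0) by (apply Rmult_le_compat_l; lra).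
        lra. }
  unfold F in HF. rewrite Rmult_0_r, exp_0, Rmult_1_r in HF.
  pose proof (V2_lower t Ht (Hg t Ht)) as L. pose proof (V2_upper Hg0) as U.
  set (cl := Rmin (mu / 4) (kR / 2)) in *.
  assert (Hcl0 : 0 < cl) by (unfold cl; apply Rmin_glb_lt; lra).
  set (cu := lmax / 2 + mu / 4 + 5 * kR / 2) in *.
  set (S0 := dot (eRf 0) (eRf 0) + dot (ef 0) (ef 0)) in *.
  set (St := dot (eRf t) (eRf t) + dot (ef t) (ef t)) in *.
  assert (Hx : exp (beta * t) * exp (- beta * t) = 1).
  { rewrite <- exp_plus. replace (beta * t + - beta * t) with 0 by ring. apply exp_0. }
  pose proof (exp_pos (- beta * t)). pose proof (exp_pos (beta * t)).
  assert (HV2t : V2 t <= V2 0 * exp (- beta * t)).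
  { apply Rmult_le_reg_r with (exp (beta * t)); [lra|].
    rewrite Rmult_assoc, (Rmult_comm (exp _)), Hx. lra. }
  assert (cl * St <= cu * S0 * exp (- beta * t)).
  { eapply Rle_trans. exact L. eapply Rle_trans. exact HV2t.
    apply Rmult_le_compat_r; lra. }
  apply Rmult_le_reg_l with cl; [lra|].
  replace (cl * (cu / cl * S0 * exp (- beta * t))) with (cu * S0 * exp (- beta * t)) by (field; lra).
  lra.
Qed.

End Traj.

Lemma dot_pos v : v <> vzero -> 0 < dot v v.
Proof.
  intros H. destruct v as [x y z]. unfold dot; cbn.
  destruct (Req_dec x 0); destruct (Req_dec y 0); destruct (Req_dec z 0);
    [subst; exfalso; apply H; reflexivity | | | | | | | ];
  pose proof (Rle_0_sqr x); pose proof (Rle_0_sqr y); pose proof (Rle_0_sqr z); unfold Rsqr in *;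
  try (assert (0 < x * x) by (apply Rsqr_pos_lt; assumption));
  try (assert (0 < y * y) by (apply Rsqr_pos_lt; assumption));
  try (assert (0 < z * z) by (apply Rsqr_pos_lt; assumption)); lra.
Qed.

Lemma sqrt_pos_inv x : 0 < sqrt x -> 0 < x.
Proof.
  intros H. destruct (Rlt_dec 0 x) as [|Hn]; [assumption|].
  rewrite sqrt_neg_0 in H; lra.
Qed.

Theorem proposition3 (J : mat) (kR kW lmax : R) :
  symmetric J -> posdef J -> is_lambda_max J lmax -> 0 < kR -> 0 < kW ->
  exists C beta : R, 0 < C /\ 0 < beta /\
  forall (Rd : R -> mat) (Wd dWd : R -> vec) (Rm : R -> mat) (W : R -> vec),
    attitude_command Rd Wd dWd ->
    closed_loop_solution J kR kW Rd Wd dWd Rm W ->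
    Psi (Rm 0) (Rd 0) < 2 ->
    (vnorm (eW (Rm 0) (W 0) (Rd 0) (Wd 0))) ^ 2
      < 2 * kR / lmax * (2 - Psi (Rm 0) (Rd 0)) ->
    (forall t, 0 <= t -> Psi (Rm t) (Rd t) < 2) /\
    (forall t, 0 <= t ->
       (vnorm (eR (Rm t) (Rd t))) ^ 2 + (vnorm (eW (Rm t) (W t) (Rd t) (Wd t))) ^ 2
       <= C * ((vnorm (eR (Rm 0) (Rd 0))) ^ 2
               + (vnorm (eW (Rm 0) (W 0) (Rd 0) (Wd 0))) ^ 2) * exp (- beta * t)).
Proof.
  intros Hs Hp Hl HkR HkW.
  destruct (mu_bound J Hs Hp) as [mu [Hmu Hmub]].
  set (M := m11 J^2 + m12 J^2 + m13 J^2 + m21 J^2 + m22 J^2 + m23 J^2 + m31 J^2 + m32 J^2 + m33 J^2).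
  assert (HM : 0 <= M).
  { unfold M. repeat apply Rplus_le_le_0_compat; apply pow2_ge_0. }
  assert (HMb : forall x, dot (mvmul J x) (mvmul J x) <= M * dot x x) by (intros; apply M_bound).
  pose proof (lmax_bound J Hs lmax Hl) as Hlmb.
  assert (Hlm : 0 < lmax).
  { destruct Hl as [[v [Hv Ev]] _]. pose proof (Hp v Hv) as H1. rewrite Ev in H1.
    rewrite dot_comm, dot_vscale_l in H1. pose proof (dot_pos v Hv).
    destruct (Rlt_dec 0 lmax) as [|Hn]; [assumption|].
    assert (lmax * dot v v <= 0) by (rewrite Rmult_comm; apply mul_nonpos; lra). lra. }
  set (K := kW * kW / kR).
  assert (HK : 0 <= K) by (unfold K; apply Rmult_le_pos; [nra | apply Rlt_le, Rinv_0_lt_compat; lra]).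
  set (eps := Rmin kR (Rmin (mu / (2 * M + 2)) (kW / (/ 4 + M + K)))).
  assert (He2 : eps <= kR) by apply Rmin_l.
  assert (He5 : eps <= mu / (2 * M + 2)) by (eapply Rle_trans; [apply Rmin_r | apply Rmin_l]).
  assert (He6 : eps <= kW / (/ 4 + M + K)) by (eapply Rle_trans; [apply Rmin_r | apply Rmin_r]).
  assert (He1 : 0 < eps).
  { unfold eps. repeat apply Rmin_glb_lt; try lra; apply Rdiv_lt_0_compat; lra. }
  assert (He3 : eps * M <= mu / 2).
  { assert (eps * (2 * M + 2) <= mu).
    { apply Rmult_le_reg_r with (/ (2 * M + 2)). apply Rinv_0_lt_compat; lra.
      rewrite Rmult_assoc, Rinv_r by lra. unfold Rdiv in He5. lra. }
    lra. }
  assert (He4 : eps * ((/ 4 + M) + kW * kW / kR) <= kW).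
  { fold K. apply Rmult_le_reg_r with (/ (/ 4 + M + K)). apply Rinv_0_lt_compat; lra.
    rewrite Rmult_assoc, Rinv_r by lra. unfold Rdiv in He6. lra. }
  set (beta := Rmin (kW / (2 * (lmax / 2 + mu / 4))) (eps / 5)).
  assert (Hb1 : 0 < beta).
  { unfold beta. apply Rmin_glb_lt; apply Rdiv_lt_0_compat; lra. }
  assert (Hb2 : beta * (lmax / 2 + mu / 4) <= kW / 2).
  { assert (beta <= kW / (2 * (lmax / 2 + mu / 4))) by apply Rmin_l.
    apply Rmult_le_reg_r with (/ (lmax / 2 + mu / 4)). apply Rinv_0_lt_compat; lra.
    rewrite Rmult_assoc, Rinv_r by lra.
    replace (kW / 2 * / (lmax / 2 + mu / 4)) with (kW / (2 * (lmax / 2 + mu / 4))) by (field; lra).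
    lra. }
  assert (Hb3 : beta * 5 <= eps).
  { assert (beta <= eps / 5) by apply Rmin_r. lra. }
  set (cl := Rmin (mu / 4) (kR / 2)).
  assert (Hcl : 0 < cl) by (unfold cl; apply Rmin_glb_lt; lra).
  exists ((lmax / 2 + mu / 4 + 5 * kR / 2) / cl), beta.
  split; [apply Rdiv_lt_0_compat; lra|]. split; [exact Hb1|].
  intros Rd Wd dWd Rm W Hatt Hcl' HPsi0 He0.
  assert (Hg0 : 0 < gf Rd Rm 0).
  { unfold Psi in HPsi0. apply sqrt_pos_inv. unfold gf. lra. }
  assert (HV : V1 J kR Rd Wd Rm W 0 < 2 * kR).
  { unfold V1. rewrite vnorm2 in He0. fold (ef Rd Wd Rm W 0) in He0.
    pose proof (Hlmb (ef Rd Wd Rm W 0)).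
    assert (lmax * dot (ef Rd Wd Rm W 0) (ef Rd Wd Rm W 0) < lmax * (2 * kR / lmax * (2 - Psi (Rm 0) (Rd 0)))).
    { apply Rmult_lt_compat_l; assumption. }
    replace (lmax * (2 * kR / lmax * (2 - Psi (Rm 0) (Rd 0)))) with (2 * kR * (2 - Psi (Rm 0) (Rd 0))) in H0
      by (field; lra).
    lra. }
  split.
  - intros t Ht.
    assert (X : 0 < gf Rd Rm t).
    { eapply g_pos with (J := J) (kR := kR) (kW := kW) (mu := mu) (dWd := dWd) (W := W) (Wd := Wd);
        eassumption. }
    unfold Psi. unfold gf in X. pose proof (sqrt_lt_R0 _ X). lra.
  - intros t Ht. rewrite !vnorm2.
    eapply expo with (J := J) (kR := kR) (kW := kW) (dWd := dWd) (eps := eps) (beta := beta) (mu := mu) (M := M) (lmax := lmax); eassumption.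
Qed.
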